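(* Fix $T>0$, a closed non-trivial rectangle $I\times J\subset(0,T]\times\mathbb R^k$ and an integer $d\ge1$. For all $N>0$, $b>0$, $\tilde\gamma>\gamma>0$ and $p>\frac{2d}{\gamma}(\tilde\gamma b-2k-4)$, there is a finite constant $C=C(I,J,N,b,\gamma,\tilde\gamma,p)>0$ such that for all $a\in[0,N]$, $$\int_Idt\int_Ids\int_Jdx\int_Jdy\,\big(|t-s|^{\tilde\gamma/2}+\|x-y\|^{\tilde\gamma}\big)^{-b/2}\Big(\frac{|t-s|^{\gamma/4}+\|x-y\|^{\gamma/2}}{a}\wedge1\Big)^{p/(2d)}\le C\,K_{\frac{\tilde\gamma}{\gamma}b-\frac{4+2k}{\gamma}}(a),$$ provided the constant $N_0$ in the definition of $K_0$ is sufficiently large.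
   Context: For $\alpha\in\mathbb R$ and $r>0$: $K_\alpha(r)=r^{-\alpha}$ if $\alpha>0$; $K_0(r)=\log(N_0/r)$ for a constant $N_0$; $K_\alpha(r)=1$ if $\alpha<0$ (with $K_\alpha(0)=+\infty$ for $\alpha\ge0$). A closed non-trivial rectangle is $I\times J$ with $I\subset(0,T]$ a closed non-degenerate interval and $J=\prod_{i=1}^k[a_i,b_i]$, $a_i<b_i$. Norms are Euclidean. *)

(* Defs.v *)
From Stdlib Require Import Reals Lra List.
Open Scope R_scope.

Fixpoint rsum (n : nat) (f : nat -> R) : R :=
  match n with O => 0 | S n' => rsum n' f + f n' end.
Fixpoint rprod (n : nat) (f : nat -> R) : R :=
  match n with O => 1 | S n' => rprod n' f * f n' end.

(* points of R^m are functions nat -> R, only coordinates < m matter *)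
Definition in_box (m : nat) (lo hi z : nat -> R) : Prop :=
  forall i, (i < m)%nat -> lo i <= z i <= hi i.

Definition box_vol (m : nat) (lo hi : nat -> R) : R :=
  rprod m (fun i => hi i - lo i).

(* A nonnegative step function below f on the box [lo,hi]:
   a finite list of (value, lower corner, upper corner) of closed boxes
   contained in [lo,hi] with pairwise disjoint interiors. *)
Definition admissible_step (m : nat) (lo hi : nat -> R) (f : (nat -> R) -> R)
    (l : list (R * (nat -> R) * (nat -> R))) : Prop :=
  Forall (fun '(c, a, b) =>
            0 <= c /\
            (forall i, (i < m)%nat -> lo i <= a i /\ a i <= b i /\ b i <= hi i) /\
            (forall z, in_box m a b z -> c <= f z)) l /\
  ForallOrdPairs (fun '(_, a, b) '(_, a', b') =>
            exists i, (i < m)%nat /\ (b i <= a' i \/ b' i <= a i)) l.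

Definition step_sum (m : nat) (l : list (R * (nat -> R) * (nat -> R))) : R :=
  fold_right (fun '(c, a, b) acc => c * box_vol m a b + acc) 0 l.

(* "∫_{[lo,hi]} f <= M" for a nonnegative (lower semicontinuous off a null
   set) integrand f: the Lebesgue integral equals the supremum of the
   integrals of the step functions below f. *)
Definition integral_le (m : nat) (lo hi : nat -> R) (f : (nat -> R) -> R) (M : R) : Prop :=
  forall l, admissible_step m lo hi f l -> step_sum m l <= M.

(* x^y for x >= 0, with 0^y := 0 (used only with bases that are > 0 off a null set) *)
Definition pw (x y : R) : R := if Rlt_dec 0 x then Rpower x y else 0.

Definition dist_k (k : nat) (x y : nat -> R) : R :=
  sqrt (rsum k (fun i => (x i - y i) ^ 2)).

(* (r / a) ∧ 1, with r/0 = +∞ for r > 0 *)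
Definition capmin (r a : R) : R :=
  if Req_EM_T a 0 then 1 else Rmin (r / a) 1.

(* Integrand on R^(2+2k): z 0 = t, z 1 = s, z (2+i) = x_i, z (2+k+i) = y_i.
   Set to 0 on the (null) diagonal t = s, x = y. *)
Definition integrand (k d : nat) (b gamma gammat p a : R) (z : nat -> R) : R :=
  let e := Rabs (z 0%nat - z 1%nat) in
  let r := dist_k k (fun i => z (2 + i)%nat) (fun i => z (2 + k + i)%nat) in
  if Rlt_dec 0 (e + r) then
    Rpower (pw e (gammat / 2) + pw r gammat) (- b / 2) *
    pw (capmin (pw e (gamma / 4) + pw r (gamma / 2)) a) (p / (2 * INR d))
  else 0.

(* corners of I × I × J × J in R^(2+2k), I = [t0,t1], J = prod [aJ i, bJ i] *)
Definition corner (k : nat) (t0 : R) (aJ : nat -> R) (j : nat) : R :=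
  if Nat.ltb j 2 then t0
  else if Nat.ltb j (2 + k) then aJ (j - 2)%nat else aJ (j - 2 - k)%nat.

(* K_alpha(r), for the values where it is finite *)
Definition Kfun (alpha N0 r : R) : R :=
  if Rlt_dec 0 alpha then Rpower r (- alpha)
  else if Req_EM_T alpha 0 then ln (N0 / r) else 1.

(* Main.v *)
Require Import Defs.
From Coquelicot Require Import Coquelicot.
From Stdlib Require Import Reals Lra Lia ZArith Classical List.
Open Scope R_scope.

Definition iopen (l r x : R) : R :=
  if Rlt_dec l x then (if Rlt_dec x r then 1 else 0) else 0.
Definition iclosed (l r x : R) : R :=
  if Rle_dec l x then (if Rle_dec x r then 1 else 0) else 0.

Definition sumw (L : list (R * (R * R))) (ind : R -> R -> R -> R) (x : R) : R :=
  fold_right (fun t acc => fst t * ind (fst (snd t)) (snd (snd t)) x + acc) 0 L.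
Definition sumlen (L : list (R * (R * R))) : R :=
  fold_right (fun t acc => fst t * (snd (snd t) - fst (snd t)) + acc) 0 L.

Lemma is_RInt_cst0 (f : R -> R) (a b c : R) : a <= b ->
  (forall x, a < x < b -> f x = c) -> is_RInt f a b ((b - a) * c).
Proof.
  intros hab h. eapply is_RInt_ext; [| apply (is_RInt_const a b c)].
  intros x hx. rewrite Rmin_left in hx by lra. rewrite Rmax_right in hx by lra.
  symmetry; apply h; lra.
Qed.

Lemma is_RInt_ind (ind : R -> R -> R -> R) (A B l r : R) :
  (forall x, l < x < r -> ind l r x = 1) ->
  (forall x, x < l -> ind l r x = 0) ->
  (forall x, r < x -> ind l r x = 0) ->
  A <= l -> l <= r -> r <= B -> is_RInt (ind l r) A B (r - l).
Proof.
  intros h1 h2 h3 hA hlr hB.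
  replace (r - l) with (plus (plus ((l - A) * 0) ((r - l) * 1)) ((B - r) * 0))
    by (unfold plus; simpl; ring).
  apply (@is_RInt_Chasles R_NormedModule) with r; [apply (@is_RInt_Chasles R_NormedModule) with l|].
  - apply is_RInt_cst0; auto. intros; apply h2; lra.
  - apply is_RInt_cst0; auto.
  - apply is_RInt_cst0; auto. intros; apply h3; lra.
Qed.

Lemma is_RInt_iopen A B l r : A <= l -> l <= r -> r <= B -> is_RInt (iopen l r) A B (r - l).
Proof.
  apply is_RInt_ind; intros x hx; unfold iopen;
   repeat destruct Rlt_dec; lra.
Qed.

Lemma is_RInt_iclosed A B l r : A <= l -> l <= r -> r <= B -> is_RInt (iclosed l r) A B (r - l).
Proof.
  apply is_RInt_ind; intros x hx; unfold iclosed;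
   repeat destruct Rle_dec; lra.
Qed.

Lemma is_RInt_sumw (ind : R -> R -> R -> R) A B L : A <= B ->
  (forall l r, A <= l -> l <= r -> r <= B -> is_RInt (ind l r) A B (r - l)) ->
  (forall t, In t L -> A <= fst (snd t) /\ fst (snd t) <= snd (snd t) /\ snd (snd t) <= B) ->
  is_RInt (sumw L ind) A B (sumlen L).
Proof.
  intros hAB hi. induction L as [|[w [l r]] L IH]; intros hL.
  - unfold sumw, sumlen; simpl.
    assert (H := is_RInt_cst0 (fun _ => 0) A B 0 hAB (fun _ _ => eq_refl)).
    replace ((B - A) * 0) with 0 in H by ring. exact H.
  - assert (H1 : is_RInt (ind l r) A B (r - l)).
    { destruct (hL (w, (l, r))) as [? [? ?]]; [left; auto|]. apply hi; auto. }
    apply (@is_RInt_scal R_NormedModule _ _ _ w) in H1.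
    assert (H2 := IH (fun t ht => hL t (or_intror ht))).
    assert (H3 := @is_RInt_plus R_NormedModule _ _ _ _ _ _ H1 H2).
    eapply is_RInt_ext; [| exact H3]. intros; reflexivity.
Qed.

Lemma bounds_exist (L : list (R * (R * R))) :
  exists A B, forall t, In t L -> A <= fst (snd t) /\ snd (snd t) <= B.
Proof.
  induction L as [|[w [l r]] L IH].
  - exists 0, 0; intros t [].
  - destruct IH as [A [B h]]. exists (Rmin A l), (Rmax B r).
    intros t [<-|ht]; simpl.
    + split; [apply Rmin_r | apply Rmax_r].
    + destruct (h t ht). split.
      * eapply Rle_trans; [apply Rmin_l| auto].
      * eapply Rle_trans; [eauto| apply Rmax_l].
Qed.

Lemma oneD (LB LQ : list (R * (R * R))) :
  (forall t, In t LB -> fst (snd t) <= snd (snd t)) ->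
  (forall t, In t LQ -> fst (snd t) <= snd (snd t)) ->
  (forall x, sumw LB iopen x <= sumw LQ iclosed x) ->
  sumlen LB <= sumlen LQ.
Proof.
  intros hB hQ hx.
  destruct (bounds_exist (LB ++ LQ)) as [A [B0 hAB]].
  set (B := Rmax A B0).
  assert (hAB' : forall t, In t (LB ++ LQ) -> A <= fst (snd t) /\ snd (snd t) <= B).
  { intros t ht; destruct (hAB t ht); split; auto. eapply Rle_trans; [eauto|apply Rmax_r]. }
  assert (hle : A <= B) by apply Rmax_l.
  apply (is_RInt_le (sumw LB iopen) (sumw LQ iclosed) A B); auto.
  - apply is_RInt_sumw; auto. { intros; apply is_RInt_iopen; auto. }
    intros t ht. destruct (hAB' t) as [? ?]; [apply in_or_app; auto|]. repeat split; auto.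
  - apply is_RInt_sumw; auto. { intros; apply is_RInt_iclosed; auto. }
    intros t ht. destruct (hAB' t) as [? ?]; [apply in_or_app; auto|]. repeat split; auto.
Qed.

Definition box := ((nat -> R) * (nat -> R))%type.
Definition sumvol m (L : list box) : R :=
  fold_right (fun B acc => box_vol m (fst B) (snd B) + acc) 0 L.
Definition okbox m (B : box) : Prop := forall i, (i < m)%nat -> fst B i <= snd B i.
Definition sep m (B B' : box) : Prop :=
  exists i, (i < m)%nat /\ (snd B i <= fst B' i \/ snd B' i <= fst B i).
Definition covered m (LB LQ : list box) : Prop :=
  forall B, In B LB -> forall z, in_box m (fst B) (snd B) z ->
  exists Q, In Q LQ /\ in_box m (fst Q) (snd Q) z.

Lemma rprod_nonneg n f : (forall i, (i < n)%nat -> 0 <= f i) -> 0 <= rprod n f.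
Proof.
  induction n; intros h; simpl. lra.
  apply Rmult_le_pos. apply IHn; intros; apply h; lia. apply h; lia.
Qed.

Lemma box_vol_nonneg m B : okbox m B -> 0 <= box_vol m (fst B) (snd B).
Proof. intros h. apply rprod_nonneg. intros i hi. specialize (h i hi). lra. Qed.

Lemma sumvol_nonneg m L : Forall (okbox m) L -> 0 <= sumvol m L.
Proof.
  induction 1; simpl. lra. pose proof (box_vol_nonneg m x H). lra.
Qed.

Lemma sumvol_In m L Q : Forall (okbox m) L -> In Q L -> box_vol m (fst Q) (snd Q) <= sumvol m L.
Proof.
  induction 1; intros hin; [destruct hin|destruct hin as [<-|h]]; simpl.
  - pose proof (sumvol_nonneg m l H0). lra.
  - pose proof (box_vol_nonneg m x H). specialize (IHForall h). lra.
Qed.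

Lemma ForallOrdPairs_filter {A} (R : A -> A -> Prop) f l :
  ForallOrdPairs R l -> ForallOrdPairs R (filter f l).
Proof.
  induction 1; simpl. constructor.
  destruct (f a); auto. constructor; auto.
  rewrite Forall_forall in *. intros y hy. apply filter_In in hy. apply H; tauto.
Qed.

Lemma ForallOrdPairs_impl_in {A} (R R' : A -> A -> Prop) l :
  (forall x y, In x l -> In y l -> R x y -> R' x y) ->
  ForallOrdPairs R l -> ForallOrdPairs R' l.
Proof.
  intros h H. induction H; constructor.
  - rewrite Forall_forall in *. intros y hy. apply h; simpl; auto.
  - apply IHForallOrdPairs. intros; apply h; simpl; auto.
Qed.

Lemma Forall_filter {A} (P : A -> Prop) f l : Forall P l -> Forall P (filter f l).
Proof. rewrite !Forall_forall. intros h x hx. apply filter_In in hx. apply h; tauto. Qed.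

Definition pB m x (B : box) : bool :=
  if Rlt_dec (fst B m) x then (if Rlt_dec x (snd B m) then true else false) else false.
Definition pQ m x (B : box) : bool :=
  if Rle_dec (fst B m) x then (if Rle_dec x (snd B m) then true else false) else false.
Definition tri m (L : list box) : list (R * (R * R)) :=
  map (fun B => (box_vol m (fst B) (snd B), (fst B m, snd B m))) L.

Lemma sumlen_tri m L : sumlen (tri m L) = sumvol (S m) L.
Proof. induction L; simpl; auto. rewrite IHL. reflexivity. Qed.

Lemma sumw_open m x L : sumw (tri m L) iopen x = sumvol m (filter (pB m x) L).
Proof.
  induction L as [|B L IH]; simpl; auto. rewrite IH. unfold pB, iopen.
  destruct Rlt_dec; [destruct Rlt_dec|]; simpl; ring.
Qed.

Lemma sumw_closed m x L : sumw (tri m L) iclosed x = sumvol m (filter (pQ m x) L).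
Proof.
  induction L as [|B L IH]; simpl; auto. rewrite IH. unfold pQ, iclosed.
  destruct Rle_dec; [destruct Rle_dec|]; simpl; ring.
Qed.

Lemma okbox_S m B : okbox (S m) B -> okbox m B.
Proof. intros h i hi; apply h; lia. Qed.

Lemma cover_vol m : forall LB LQ, Forall (okbox m) LB -> Forall (okbox m) LQ ->
  ForallOrdPairs (sep m) LB -> covered m LB LQ -> sumvol m LB <= sumvol m LQ.
Proof.
  induction m as [|m IH]; intros LB LQ hB hQ hs hc.
  - destruct LB as [|B LB].
    + simpl. apply sumvol_nonneg; auto.
    + inversion hs; subst. destruct LB as [|B' LB].
      2:{ inversion H1; subst. destruct H3 as [i [hi _]]. lia. }
      destruct (hc B (or_introl eq_refl) (fun _ => 0)) as [Q [hQin _]].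
      { intros i hi; exfalso; lia. }
      pose proof (sumvol_In 0 LQ Q hQ hQin). unfold sumvol, box_vol in *; simpl in *. lra.
  - rewrite <- !sumlen_tri. apply oneD.
    + intros t ht. unfold tri in ht. apply in_map_iff in ht. destruct ht as [B [<- hB']].
      rewrite Forall_forall in hB. apply hB; auto.
    + intros t ht. unfold tri in ht. apply in_map_iff in ht. destruct ht as [B [<- hB']].
      rewrite Forall_forall in hQ. apply hQ; auto.
    + intros x. rewrite sumw_open, sumw_closed. apply IH.
      * apply Forall_filter. eapply Forall_impl; [|exact hB]. apply okbox_S.
      * apply Forall_filter. eapply Forall_impl; [|exact hQ]. apply okbox_S.
      * apply ForallOrdPairs_impl_in with (R := sep (S m)).
        2: apply ForallOrdPairs_filter; auto.
        intros B1 B2 h1 h2 [i [hi hsep]].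
        apply filter_In in h1, h2. destruct h1 as [_ h1]; destruct h2 as [_ h2].
        unfold pB in h1, h2.
        destruct (Rlt_dec (fst B1 m) x); [|discriminate]; destruct (Rlt_dec x (snd B1 m)); [|discriminate].
        destruct (Rlt_dec (fst B2 m) x); [|discriminate]; destruct (Rlt_dec x (snd B2 m)); [|discriminate].
        destruct (Nat.eq_dec i m) as [->|hne]; [lra|].
        exists i; split; [lia|auto].
      * intros B hBin z hz. apply filter_In in hBin. destruct hBin as [hBin hp].
        unfold pB in hp.
        destruct (Rlt_dec (fst B m) x); [|discriminate]; destruct (Rlt_dec x (snd B m)); [|discriminate].
        set (z' := fun i => if Nat.eq_dec i m then x else z i).
        destruct (hc B hBin z') as [Q [hQin hQz]].
        { intros i hi. unfold z'. destruct (Nat.eq_dec i m) as [->|hne]; [lra|].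
          apply hz; lia. }
        exists Q; split.
        -- apply filter_In; split; auto. unfold pQ.
           destruct (hQz m ltac:(lia)) as [h1 h2]. unfold z' in h1, h2.
           destruct (Nat.eq_dec m m); [|congruence].
           destruct Rle_dec; [|lra]; destruct Rle_dec; [|lra]; auto.
        -- intros i hi. destruct (hQz i ltac:(lia)) as [h1 h2]. unfold z' in h1, h2.
           destruct (Nat.eq_dec i m); [lia|]. auto.
Qed.

Lemma rprod_ext n f g : (forall j, (j < n)%nat -> f j = g j) -> rprod n f = rprod n g.
Proof.
  induction n; intros h; simpl; auto. rewrite IHn by (intros; apply h; lia). rewrite h by lia. auto.
Qed.

Lemma rprod_upd1 n f g p u : (forall j, j <> p -> g j = f j) -> g p = u -> (p < n)%nat ->
  rprod n g * f p = rprod n f * u.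
Proof.
  induction n; intros h1 h2 hp; [lia|]. simpl.
  destruct (Nat.eq_dec n p) as [->|hne].
  - rewrite (rprod_ext p g f) by (intros; apply h1; lia). rewrite h2. ring.
  - rewrite (h1 n hne). transitivity (rprod n g * f p * f n); [ring|].
    rewrite IHn by (auto; lia). ring.
Qed.

Definition upd2 (f : nat -> R) p1 v1 p2 v2 : nat -> R :=
  fun j => if Nat.eq_dec j p1 then v1 else if Nat.eq_dec j p2 then v2 else f j.

Lemma rprod_upd2 n f p1 u p2 v : p1 <> p2 -> (p1 < n)%nat -> (p2 < n)%nat ->
  rprod n (fun j => if Nat.eq_dec j p1 then u else if Nat.eq_dec j p2 then v else f j)
    * (f p1 * f p2) = rprod n f * (u * v).
Proof.
  intros hne h1 h2.
  set (g := fun j => if Nat.eq_dec j p2 then v else f j).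
  assert (E1 : rprod n (fun j => if Nat.eq_dec j p1 then u else if Nat.eq_dec j p2 then v else f j) * g p1
             = rprod n g * u).
  { apply rprod_upd1; auto.
    - intros j hj. destruct (Nat.eq_dec j p1); [congruence|]. reflexivity.
    - destruct (Nat.eq_dec p1 p1); congruence. }
  assert (E2 : rprod n g * f p2 = rprod n f * v).
  { apply rprod_upd1; auto.
    - intros j hj. unfold g. destruct (Nat.eq_dec j p2); [congruence|]. reflexivity.
    - unfold g. destruct (Nat.eq_dec p2 p2); congruence. }
  assert (g p1 = f p1) by (unfold g; destruct (Nat.eq_dec p1 p2); congruence).
  rewrite H in E1.
  transitivity (rprod n (fun j => if Nat.eq_dec j p1 then u else if Nat.eq_dec j p2 then v else f j) * f p1 * f p2); [ring|].
  rewrite E1. transitivity (rprod n g * f p2 * u); [ring|]. rewrite E2. ring.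
Qed.

Definition refine p1 p2 (ivs : list (R * R)) (Q : box) : list box :=
  map (fun iv => (upd2 (fst Q) p1 (fst iv) p2 (fst iv), upd2 (snd Q) p1 (snd iv) p2 (snd iv))) ivs.
Definition rstep p1 p2 ivs (LQ : list box) : list box := flat_map (refine p1 p2 ivs) LQ.
Definition ivsum (ivs : list (R * R)) : R :=
  fold_right (fun iv acc => (snd iv - fst iv) * (snd iv - fst iv) + acc) 0 ivs.

Lemma box_vol_upd2 m Q p1 p2 iv L : p1 <> p2 -> (p1 < m)%nat -> (p2 < m)%nat ->
  snd Q p1 - fst Q p1 = L -> snd Q p2 - fst Q p2 = L -> L <> 0 ->
  box_vol m (upd2 (fst Q) p1 (fst iv) p2 (fst iv)) (upd2 (snd Q) p1 (snd iv) p2 (snd iv))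
  = box_vol m (fst Q) (snd Q) * ((snd iv - fst iv) * (snd iv - fst iv)) / (L * L).
Proof.
  intros hne h1 h2 e1 e2 hL. unfold box_vol.
  assert (E := rprod_upd2 m (fun i => snd Q i - fst Q i) p1 (snd iv - fst iv) p2 (snd iv - fst iv) hne h1 h2).
  simpl in E. rewrite e1, e2 in E.
  rewrite (rprod_ext m _ (fun j => if Nat.eq_dec j p1 then snd iv - fst iv
      else if Nat.eq_dec j p2 then snd iv - fst iv else snd Q j - fst Q j)).
  - apply (Rmult_eq_reg_r (L * L)); [| apply Rmult_integral_contrapositive; tauto].
    rewrite E. field. auto.
  - intros j hj. unfold upd2. destruct (Nat.eq_dec j p1); auto. destruct (Nat.eq_dec j p2); auto.
Qed.

Lemma sumvol_refine m Q p1 p2 ivs L : p1 <> p2 -> (p1 < m)%nat -> (p2 < m)%nat ->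
  snd Q p1 - fst Q p1 = L -> snd Q p2 - fst Q p2 = L -> L <> 0 ->
  sumvol m (refine p1 p2 ivs Q) = box_vol m (fst Q) (snd Q) * ivsum ivs / (L * L).
Proof.
  intros. induction ivs as [|iv ivs IH]; simpl. field; auto.
  rewrite IH. rewrite (box_vol_upd2 m Q p1 p2 iv L) by auto. simpl. field; auto.
Qed.

Lemma sumvol_app m L1 L2 : sumvol m (L1 ++ L2) = sumvol m L1 + sumvol m L2.
Proof. induction L1; simpl; auto. lra. rewrite IHL1; ring. Qed.

Lemma sumvol_rstep m LQ p1 p2 ivs L : p1 <> p2 -> (p1 < m)%nat -> (p2 < m)%nat -> L <> 0 ->
  (forall Q, In Q LQ -> snd Q p1 - fst Q p1 = L /\ snd Q p2 - fst Q p2 = L) ->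
  sumvol m (rstep p1 p2 ivs LQ) = sumvol m LQ * ivsum ivs / (L * L).
Proof.
  intros hne h1 h2 hL hQ. induction LQ as [|Q LQ IH]; simpl. field; auto.
  unfold rstep in *; simpl. rewrite sumvol_app. rewrite IH by (intros; apply hQ; simpl; auto).
  destruct (hQ Q (or_introl eq_refl)).
  rewrite (sumvol_refine m Q p1 p2 ivs L) by auto. field; auto.
Qed.

Lemma Rdiv_le_0_compat a b : 0 <= a -> 0 < b -> 0 <= a / b.
Proof. intros; unfold Rdiv; apply Rmult_le_pos; auto. left; apply Rinv_0_lt_compat; auto. Qed.

Definition Nnum (L h : R) : nat := Z.to_nat (up (L / h)).
Definition ivs (l L h : R) : list (R * R) :=
  map (fun i => (l + (INR i - 1) * h, l + (INR i + 2) * h)) (seq 0 (Nnum L h)).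

Lemma ivsum_const (l' : list (R * R)) c : Forall (fun iv => snd iv - fst iv = c) l' ->
  ivsum l' = INR (length l') * (c * c).
Proof.
  induction 1; simpl. ring. rewrite IHForall, H. destruct (length l); simpl; ring.
Qed.

Lemma ivsum_ivs l L h : ivsum (ivs l L h) = INR (Nnum L h) * (9 * (h * h)).
Proof.
  rewrite (ivsum_const _ (3 * h)).
  - unfold ivs. rewrite length_map, length_seq. ring.
  - unfold ivs. rewrite Forall_map. apply Forall_forall. intros; simpl. ring.
Qed.

Lemma Nnum_bound L h : 0 <= L -> 0 < h -> INR (Nnum L h) <= L / h + 1.
Proof.
  intros hL hh. unfold Nnum. destruct (archimed (L / h)) as [a1 a2].
  assert (0 <= L / h) by (apply Rdiv_le_0_compat; lra).
  assert (hz : (0 <= up (L / h))%Z) by (apply le_IZR; lra).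
  rewrite INR_IZR_INZ, Z2Nat.id by auto. lra.
Qed.

Lemma ivs_cover l L h t s : 0 < h -> l <= t <= l + L -> l <= s <= l + L -> Rabs (t - s) < h ->
  exists iv, In iv (ivs l L h) /\ fst iv <= t <= snd iv /\ fst iv <= s <= snd iv.
Proof.
  intros hh ht hs hts.
  set (y := (t - l) / h).
  assert (hy : 0 <= y) by (apply Rdiv_le_0_compat; lra).
  assert (hyL : y <= L / h) by (unfold y; unfold Rdiv; apply Rmult_le_compat_r; [left; apply Rinv_0_lt_compat; lra| lra]).
  destruct (archimed y) as [a1 a2].
  destruct (archimed (L / h)) as [b1 b2].
  set (z := (up y - 1)%Z).
  assert (hz1 : IZR z <= y) by (unfold z; rewrite minus_IZR; simpl; lra).
  assert (hz2 : y < IZR z + 1) by (unfold z; rewrite minus_IZR; simpl; lra).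
  assert (hz0' : (-1 < z)%Z) by (apply lt_IZR; simpl; lra).
  assert (hz0 : (0 <= z)%Z) by lia.
  assert (hzw : (z < up (L / h))%Z) by (apply lt_IZR; lra).
  exists (l + (IZR z - 1) * h, l + (IZR z + 2) * h). split.
  - unfold ivs. apply in_map_iff. exists (Z.to_nat z). split.
    + rewrite INR_IZR_INZ, Z2Nat.id by auto. reflexivity.
    + apply in_seq. split; [lia|]. simpl. unfold Nnum. apply Z2Nat.inj_lt; lia.
  - assert (e1 : IZR z * h <= t - l).
    { unfold y in hz1. apply (Rmult_le_compat_r h) in hz1; [|lra]. unfold Rdiv in hz1.
      rewrite Rmult_assoc, Rinv_l, Rmult_1_r in hz1 by lra. exact hz1. }
    assert (e2 : t - l < (IZR z + 1) * h).
    { unfold y in hz2. apply (Rmult_lt_compat_r h) in hz2; [|lra]. unfold Rdiv in hz2.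
      rewrite Rmult_assoc, Rinv_l, Rmult_1_r in hz2 by lra. exact hz2. }
    apply Rabs_def2 in hts. simpl. nra.
Qed.

Section Cover.
Variables (k : nat) (t0 t1 : R) (aJ bJ : nat -> R) (eps : R).
Hypothesis ht : t0 < t1.
Hypothesis hJ : forall i, (i < k)%nat -> aJ i < bJ i.
Hypothesis heps : 0 < eps.

Definition bigbox : box := (corner k t0 aJ, corner k t1 bJ).

Lemma corner_0 t a : corner k t a 0 = t. Proof. reflexivity. Qed.
Lemma corner_1 t a : corner k t a 1 = t. Proof. reflexivity. Qed.
Lemma corner_x t a i : (i < k)%nat -> corner k t a (2 + i)%nat = a i.
Proof.
  intros hi. unfold corner. destruct (Nat.ltb_spec (2 + i)%nat 2); [lia|].
  destruct (Nat.ltb_spec (2 + i)%nat (2 + k)); [|lia]. f_equal; lia.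
Qed.
Lemma corner_y t a i : (i < k)%nat -> corner k t a (2 + k + i)%nat = a i.
Proof.
  intros hi. unfold corner. destruct (Nat.ltb_spec (2 + k + i)%nat 2); [lia|].
  destruct (Nat.ltb_spec (2 + k + i)%nat (2 + k)); [lia|]. f_equal; lia.
Qed.

Fixpoint covj (j : nat) : list box :=
  match j with
  | O => refine 0 1 (ivs t0 (t1 - t0) (eps * eps)) bigbox
  | S j => rstep (2 + j)%nat (2 + k + j)%nat (ivs (aJ j) (bJ j - aJ j) eps) (covj j)
  end.

Definition inv_j (j : nat) (Q : box) : Prop :=
  forall i, (j <= i < k)%nat -> fst Q (2 + i)%nat = aJ i /\ snd Q (2 + i)%nat = bJ i /\
     fst Q (2 + k + i)%nat = aJ i /\ snd Q (2 + k + i)%nat = bJ i.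

Lemma covj_inv j : forall Q, In Q (covj j) -> inv_j j Q.
Proof.
  induction j as [|j IH]; intros Q hQ; simpl in hQ.
  - unfold refine in hQ. apply in_map_iff in hQ. destruct hQ as [iv [<- _]].
    intros i hi. unfold upd2; cbn [fst snd bigbox].
    destruct (Nat.eq_dec (2 + i)%nat 0); [lia|]. destruct (Nat.eq_dec (2 + i)%nat 1); [lia|].
    destruct (Nat.eq_dec (2 + k + i)%nat 0); [lia|]. destruct (Nat.eq_dec (2 + k + i)%nat 1); [lia|].
    rewrite !corner_x, !corner_y by lia. auto.
  - unfold rstep in hQ. apply in_flat_map in hQ. destruct hQ as [Q0 [hQ0 hQ]].
    unfold refine in hQ. apply in_map_iff in hQ. destruct hQ as [iv [<- _]].
    intros i hi. destruct (IH Q0 hQ0 i ltac:(lia)) as [e1 [e2 [e3 e4]]].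
    unfold upd2; cbn [fst snd].
    repeat (destruct Nat.eq_dec; [lia|]). auto.
Qed.

Lemma ivs_ok l L h : 0 < h -> forall iv, In iv (ivs l L h) -> fst iv <= snd iv.
Proof. intros hh iv hiv. unfold ivs in hiv. apply in_map_iff in hiv. destruct hiv as [i [<- _]]. simpl. nra. Qed.

Lemma refine_ok m p1 p2 l' Q : okbox m Q -> (forall iv, In iv l' -> fst iv <= snd iv) ->
  forall Q', In Q' (refine p1 p2 l' Q) -> okbox m Q'.
Proof.
  intros hQ hl Q' hQ'. unfold refine in hQ'. apply in_map_iff in hQ'. destruct hQ' as [iv [<- hiv]].
  intros i hi. unfold upd2; cbn [fst snd]. specialize (hl iv hiv).
  repeat destruct Nat.eq_dec; auto; apply hQ; auto.
Qed.

Lemma bigbox_ok : okbox (2 + 2 * k)%nat bigbox.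
Proof.
  intros n hn. unfold bigbox; cbn [fst snd].
  unfold corner. destruct (Nat.ltb_spec n 2). lra. destruct (Nat.ltb_spec n (2 + k)).
  - specialize (hJ (n - 2) ltac:(lia)). lra.
  - specialize (hJ (n - 2 - k) ltac:(lia)). lra.
Qed.

Lemma covj_ok j : forall Q, In Q (covj j) -> okbox (2 + 2 * k)%nat Q.
Proof.
  induction j as [|j IH]; intros Q hQ; simpl in hQ.
  - eapply refine_ok; [apply bigbox_ok| |exact hQ]. apply ivs_ok. nra.
  - unfold rstep in hQ. apply in_flat_map in hQ. destruct hQ as [Q0 [hQ0 hQ]].
    eapply refine_ok; [apply IH; exact hQ0| |exact hQ]. apply ivs_ok. auto.
Qed.

Definition cfac (L : R) : R := 9 * (L + 1) / (L * L).
Definition Vbig : R := box_vol (2 + 2 * k)%nat (corner k t0 aJ) (corner k t1 bJ).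

Lemma ivsum_bound l L h : 0 < L -> 0 < h -> h <= 1 ->
  ivsum (ivs l L h) / (L * L) <= cfac L * h.
Proof.
  intros hL hh h1. rewrite ivsum_ivs. pose proof (Nnum_bound L h ltac:(lra) hh).
  unfold cfac.
  assert (0 < / (L * L)) by (apply Rinv_0_lt_compat; nra).
  assert (INR (Nnum L h) * (9 * (h * h)) <= (L / h + 1) * (9 * (h * h))) by (apply Rmult_le_compat_r; nra).
  replace ((L / h + 1) * (9 * (h * h))) with (9 * (h * (L + h))) in H1 by (field; lra).
  apply Rle_trans with (9 * (h * (L + h)) / (L * L)).
  { unfold Rdiv. apply Rmult_le_compat_r; lra. }
  replace (9 * (L + 1) / (L * L) * h) with (9 * (h * (L + 1)) / (L * L)) by (field; lra).
  unfold Rdiv. apply Rmult_le_compat_r; nra.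
Qed.

Lemma Vbig_pos : 0 < Vbig.
Proof.
  unfold Vbig, box_vol. assert (h : forall n, (n <= 2 + 2 * k)%nat -> 0 < rprod n (fun i => corner k t1 bJ i - corner k t0 aJ i)).
  { induction n; intros hn; simpl. lra. apply Rmult_lt_0_compat. apply IHn; lia.
    unfold corner. destruct (Nat.ltb_spec n 2). lra. destruct (Nat.ltb_spec n (2 + k)).
    - specialize (hJ (n - 2) ltac:(lia)). lra.
    - specialize (hJ (n - 2 - k) ltac:(lia)). lra. }
  apply h; lia.
Qed.

Lemma covj_vol j : (j <= k)%nat -> eps <= 1 ->
  sumvol (2 + 2 * k)%nat (covj j) <= Vbig * (cfac (t1 - t0) * (eps * eps)) * rprod j (fun i => cfac (bJ i - aJ i) * eps).
Proof.
  induction j as [|j IH]; intros hj he; cbn [covj rprod].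
  - rewrite (sumvol_refine _ bigbox 0 1 _ (t1 - t0)); try (simpl; lia || reflexivity || lra).
    rewrite Rmult_1_r. unfold Vbig. fold (box_vol (2 + 2 * k)%nat (fst bigbox) (snd bigbox)).
    unfold Rdiv. rewrite Rmult_assoc. apply Rmult_le_compat_l.
    + left; apply Vbig_pos.
    + apply ivsum_bound; try lra. apply Rmult_lt_0_compat; lra. nra.
  - rewrite (sumvol_rstep _ _ _ _ _ (bJ j - aJ j)); try lia.
    2: { specialize (hJ j ltac:(lia)). lra. }
    2: { intros Q hQ. destruct (covj_inv j Q hQ j ltac:(lia)) as [e1 [e2 [e3 e4]]].
         rewrite e1, e2, e3, e4. auto. }
    unfold Rdiv. rewrite Rmult_assoc.
    assert (hf : 0 <= cfac (bJ j - aJ j) * eps).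
    { unfold cfac. specialize (hJ j ltac:(lia)). apply Rmult_le_pos; [|lra].
      apply Rdiv_le_0_compat; [lra|nra]. }
    assert (hb : ivsum (ivs (aJ j) (bJ j - aJ j) eps) * / ((bJ j - aJ j) * (bJ j - aJ j)) <= cfac (bJ j - aJ j) * eps).
    { apply ivsum_bound; auto. specialize (hJ j ltac:(lia)); lra. }
    assert (hs : 0 <= sumvol (2 + 2 * k)%nat (covj j)).
    { apply sumvol_nonneg. apply Forall_forall. apply covj_ok. }
    apply Rle_trans with (sumvol (2 + 2 * k)%nat (covj j) * (cfac (bJ j - aJ j) * eps)).
    + apply Rmult_le_compat_l; auto.
    + assert (IH' := IH ltac:(lia) he).
      apply (Rmult_le_compat_r (cfac (bJ j - aJ j) * eps)) in IH'; auto.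
      eapply Rle_trans; [exact IH'|]. right; ring.
Qed.
Lemma in_refine m p1 p2 l' Q iv z : In iv l' -> in_box m (fst Q) (snd Q) z ->
  fst iv <= z p1 <= snd iv -> fst iv <= z p2 <= snd iv ->
  exists Q', In Q' (refine p1 p2 l' Q) /\ in_box m (fst Q') (snd Q') z.
Proof.
  intros hiv hQ h1 h2. exists (upd2 (fst Q) p1 (fst iv) p2 (fst iv), upd2 (snd Q) p1 (snd iv) p2 (snd iv)).
  split.
  - unfold refine. apply in_map_iff. exists iv; auto.
  - intros i hi. unfold upd2; cbn [fst snd].
    destruct Nat.eq_dec as [->|]; auto. destruct Nat.eq_dec as [->|]; auto.
Qed.

Lemma covj_cover j : (j <= k)%nat -> forall z, in_box (2 + 2 * k)%nat (fst bigbox) (snd bigbox) z ->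
  Rabs (z 0%nat - z 1%nat) < eps * eps ->
  (forall i, (i < j)%nat -> Rabs (z (2 + i)%nat - z (2 + k + i)%nat) < eps) ->
  exists Q, In Q (covj j) /\ in_box (2 + 2 * k)%nat (fst Q) (snd Q) z.
Proof.
  intros hj z hz h0 hx. induction j as [|j IH].
  - destruct (ivs_cover t0 (t1 - t0) (eps * eps) (z 0%nat) (z 1%nat)) as [iv [hiv [i1 i2]]].
    + nra.
    + destruct (hz 0%nat ltac:(lia)). unfold bigbox in *; cbn [fst snd] in *. rewrite corner_0 in *. lra.
    + destruct (hz 1%nat ltac:(lia)). unfold bigbox in *; cbn [fst snd] in *. rewrite corner_1 in *. lra.
    + auto.
    + eapply in_refine; eauto.
  - destruct IH as [Q [hQ hzQ]]; [lia| intros; apply hx; lia |].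
    destruct (ivs_cover (aJ j) (bJ j - aJ j) eps (z (2 + j)%nat) (z (2 + k + j)%nat)) as [iv [hiv [i1 i2]]].
    + auto.
    + destruct (hz (2 + j)%nat ltac:(lia)). unfold bigbox in *; cbn [fst snd] in *. rewrite !corner_x in * by lia. lra.
    + destruct (hz (2 + k + j)%nat ltac:(lia)). unfold bigbox in *; cbn [fst snd] in *. rewrite !corner_y in * by lia. lra.
    + apply hx; lia.
    + destruct (in_refine _ (2 + j)%nat (2 + k + j)%nat _ Q iv z hiv hzQ i1 i2) as [Q' [h1 h2]].
      exists Q'. split; auto. simpl. unfold rstep. apply in_flat_map. exists Q; auto.
Qed.
End Cover.

Lemma rsum_plus n F G : rsum n (fun i => F i + G i) = rsum n F + rsum n G.
Proof. induction n; simpl. ring. rewrite IHn. ring. Qed.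
Lemma rsum_scal n F v : rsum n (fun i => F i * v) = rsum n F * v.
Proof. induction n; simpl. ring. rewrite IHn. ring. Qed.
Lemma rsum_le n F G : (forall i, (i < n)%nat -> F i <= G i) -> rsum n F <= rsum n G.
Proof. induction n; intros h; simpl. lra. apply Rplus_le_compat. apply IHn; intros; apply h; lia. apply h; lia. Qed.
Lemma rsum_ext n F G : (forall i, F i = G i) -> rsum n F = rsum n G.
Proof. intros h; induction n; simpl; auto. rewrite IHn, h; auto. Qed.
Lemma rsum_nonneg n F : (forall i, (i < n)%nat -> 0 <= F i) -> 0 <= rsum n F.
Proof. intros h. replace 0 with (rsum n (fun _ => 0)). apply rsum_le; auto. induction n; simpl; auto. rewrite IHn; [ring|]. intros; apply h; lia. Qed.

Definition gtb (c l : R) : R := if Rlt_dec l c then 1 else 0.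

Section Layer.
Variable lam : nat -> R.
Hypothesis hmono : forall n, lam n <= lam (S n).
Hypothesis hl0 : 0 <= lam 0%nat.

Lemma lam_mono n m : (n <= m)%nat -> lam n <= lam m.
Proof. induction 1. lra. specialize (hmono m). lra. Qed.
Lemma lam_nonneg n : 0 <= lam n.
Proof. pose proof (lam_mono 0 n ltac:(lia)). lra. Qed.

Lemma layer1 c M : Rmin c (lam M) <= lam 0%nat + rsum M (fun n => (lam (S n) - lam n) * gtb c (lam n)).
Proof.
  induction M; simpl. pose proof (Rmin_r c (lam 0%nat)); lra.
  specialize (hmono M). unfold gtb in *. destruct (Rlt_dec (lam M) c).
  - unfold Rmin in *. destruct (Rle_dec c (lam M)); destruct (Rle_dec c (lam (S M))); lra.
  - unfold Rmin in *. destruct (Rle_dec c (lam M)); destruct (Rle_dec c (lam (S M))); lra.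
Qed.

Variable m : nat.
Variables (lo hi : nat -> R) (f : (nat -> R) -> R).
Variable LQ : nat -> list box.
Hypothesis hLQok : forall n, Forall (okbox m) (LQ n).
Hypothesis hLQ : forall n z, in_box m lo hi z -> lam n < f z -> exists Q, In Q (LQ n) /\ in_box m (fst Q) (snd Q) z.
Hypothesis hbig : forall i, (i < m)%nat -> lo i <= hi i.

Definition elt := (R * (nat -> R) * (nat -> R))%type.
Definition ebox (e : elt) : box := (snd (fst e), snd e).
Definition ec (e : elt) : R := fst (fst e).
Definition Wn (l : list elt) (n : nat) : R :=
  fold_right (fun e acc => gtb (ec e) (lam n) * box_vol m (fst (ebox e)) (snd (ebox e)) + acc) 0 l.

Lemma Wn_filter l n : Wn l n = sumvol m (map ebox (filter (fun e => if Rlt_dec (lam n) (ec e) then true else false) l)).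
Proof.
  induction l as [|e l IH]; simpl; auto. rewrite IH. unfold gtb.
  destruct Rlt_dec; simpl; ring.
Qed.

Lemma step_sum_layer (l : list elt) M :
  (forall e, In e l -> ec e <= lam M) ->
  Forall (fun e => okbox m (ebox e)) l ->
  step_sum m l <= lam 0%nat * sumvol m (map ebox l) + rsum M (fun n => (lam (S n) - lam n) * Wn l n).
Proof.
  intros hc hok. induction l as [|[[c a] b] l IH].
  - simpl. unfold Wn. simpl. rewrite (rsum_ext M _ (fun _ => 0 * 0)) by (intros; ring).
    rewrite rsum_scal. lra.
  - inversion hok; subst. simpl.
    assert (IH' := IH (fun e he => hc e (or_intror he)) H2).
    assert (hv : 0 <= box_vol m a b) by (apply (box_vol_nonneg m (a, b)); exact H1).
    assert (hcM := hc _ (or_introl eq_refl)). unfold ec in hcM; simpl in hcM.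
    assert (L1 := layer1 c M). rewrite Rmin_left in L1 by auto.
    unfold Wn at 1. simpl. fold (Wn l).
    rewrite (rsum_ext M _ (fun n => ((lam (S n) - lam n) * gtb c (lam n)) * box_vol m a b + (lam (S n) - lam n) * Wn l n))
      by (intros; unfold Wn, ebox, ec; simpl; ring).
    rewrite rsum_plus, rsum_scal.
    apply (Rmult_le_compat_r (box_vol m a b)) in L1; auto.
    unfold ebox at 1; simpl.
    change (map (fun e : elt => (snd (fst e), snd e)) l) with (map ebox l). nra.
Qed.

Lemma ForallOrdPairs_map {A B} (R : A -> A -> Prop) (R' : B -> B -> Prop) (g : A -> B) l :
  (forall x y, R x y -> R' (g x) (g y)) -> ForallOrdPairs R l -> ForallOrdPairs R' (map g l).
Proof.
  intros h H. induction H; simpl; constructor; auto.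
  rewrite Forall_map. eapply Forall_impl; [|exact H]. auto.
Qed.

Lemma layer_main (l : list elt) :
  admissible_step m lo hi f l ->
  (forall e, In e l -> exists M0, ec e <= lam M0) ->
  exists M, step_sum m l <= lam 0%nat * sumvol m ((lo, hi) :: nil) + rsum M (fun n => lam (S n) * sumvol m (LQ n)).
Proof.
  intros [hF hP] hM.
  assert (hF' : forall e, In e l -> 0 <= ec e /\ okbox m (ebox e) /\
     (forall i, (i < m)%nat -> lo i <= fst (ebox e) i /\ snd (ebox e) i <= hi i) /\
     (forall z, in_box m (fst (ebox e)) (snd (ebox e)) z -> ec e <= f z)).
  { intros [[c a] b] he. rewrite Forall_forall in hF. specialize (hF _ he). simpl in hF.
    destruct hF as [h1 [h2 h3]]. unfold ec, ebox; simpl. repeat split; auto.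
    - intros i Hi; destruct (h2 i Hi); tauto.
    - destruct (h2 i H); tauto.
    - destruct (h2 i H); tauto. }
  assert (hGM : exists M, forall e, In e l -> ec e <= lam M).
  { clear hF hP hF'. induction l as [|e l IH].
    - exists 0%nat; intros e [].
    - destruct IH as [M1 h1]. { intros; apply hM; simpl; auto. }
      destruct (hM e (or_introl eq_refl)) as [M2 h2].
      exists (Nat.max M1 M2). intros e' [<-|he'].
      + eapply Rle_trans; [exact h2|]. apply lam_mono; lia.
      + eapply Rle_trans; [apply h1; auto|]. apply lam_mono; lia. }
  destruct hGM as [M hGM]. exists M.
  assert (hok : Forall (fun e => okbox m (ebox e)) l) by (apply Forall_forall; intros; apply hF'; auto).
  assert (hsep : ForallOrdPairs (sep m) (map ebox l)).
  { apply ForallOrdPairs_map with (R := fun '((_, a, b) : elt) '((_, a', b') : elt) =>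
        exists i, (i < m)%nat /\ (b i <= a' i \/ b' i <= a i)).
    - intros [[c a] b] [[c' a'] b'] h. exact h.
    - exact hP. }
  eapply Rle_trans; [apply step_sum_layer; auto|].
  apply Rplus_le_compat.
  - apply Rmult_le_compat_l; [apply lam_nonneg|].
    apply cover_vol.
    + rewrite Forall_map; auto.
    + constructor; [|constructor]. intros i Hi; apply hbig; auto.
    + auto.
    + intros B hB z hz. exists (lo, hi). split; [left; auto|].
      apply in_map_iff in hB. destruct hB as [e [<- he]].
      destruct (hF' e he) as [_ [_ [h3 _]]]. intros i Hi. destruct (h3 i Hi). destruct (hz i Hi). cbn [fst snd] in *. split; lra.
  - apply rsum_le. intros n hn.
    assert (hW : Wn l n <= sumvol m (LQ n)).
    { rewrite Wn_filter. apply cover_vol.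
      + apply Forall_map. apply Forall_filter; auto.
      + apply hLQok.
      + apply ForallOrdPairs_map with (R := fun '((_, a, b) : elt) '((_, a', b') : elt) =>
          exists i, (i < m)%nat /\ (b i <= a' i \/ b' i <= a i)).
        * intros [[c a] b] [[c' a'] b'] h. exact h.
        * apply ForallOrdPairs_filter. exact hP.
      + intros B hB z hz. apply in_map_iff in hB. destruct hB as [e [<- he]].
        apply filter_In in he. destruct he as [he hlt].
        destruct (Rlt_dec (lam n) (ec e)) as [hlt'|]; [|discriminate].
        destruct (hF' e he) as [_ [_ [h3 h4]]].
        apply hLQ.
        * intros i Hi. destruct (h3 i Hi). destruct (hz i Hi). split; lra.
        * specialize (h4 z hz). lra. }
    assert (hW0 : 0 <= Wn l n).
    { rewrite Wn_filter. apply sumvol_nonneg. apply Forall_map. apply Forall_filter; auto. }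
    pose proof (hmono n). pose proof (lam_nonneg n).
    apply Rle_trans with ((lam (S n) - lam n) * sumvol m (LQ n)).
    + apply Rmult_le_compat_l; lra.
    + apply Rmult_le_compat_r; [|lra]. apply Rle_trans with (Wn l n); auto.
Qed.
End Layer.

Lemma exp_le x y : x <= y -> exp x <= exp y.
Proof. intros [h|h]; [left; apply exp_increasing; auto| right; subst; auto]. Qed.
Lemma ln_le' x y : 0 < x -> x <= y -> ln x <= ln y.
Proof. intros hx [h|h]; [left; apply ln_increasing; auto| right; subst; auto]. Qed.
Lemma ln_neg x : 0 < x -> x < 1 -> ln x < 0.
Proof. intros; rewrite <- ln_1; apply ln_increasing; auto. Qed.
Lemma ln_pos x : 1 < x -> 0 < ln x.
Proof. intros; rewrite <- ln_1; apply ln_increasing; lra. Qed.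

Lemma RP_pos x y : 0 < Rpower x y.
Proof. apply exp_pos. Qed.
Lemma RP_le x y x' y' : y * ln x <= y' * ln x' -> Rpower x y <= Rpower x' y'.
Proof. intros; unfold Rpower; apply exp_le; auto. Qed.
Lemma RP_ln x y : ln (Rpower x y) = y * ln x.
Proof. unfold Rpower; apply ln_exp. Qed.
Lemma RP_mul x y z : 0 < x -> 0 < y -> Rpower (x * y) z = Rpower x z * Rpower y z.
Proof. intros; unfold Rpower. rewrite ln_mult by auto. rewrite <- exp_plus. f_equal; ring. Qed.
Lemma RP_div x y z : 0 < x -> 0 < y -> Rpower (x / y) z = Rpower x z * Rpower y (- z).
Proof.
  intros; unfold Rpower, Rdiv. rewrite ln_mult, ln_Rinv by (auto; apply Rinv_0_lt_compat; auto).
  rewrite <- exp_plus. f_equal; ring.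
Qed.
Lemma RP_1 y : Rpower 1 y = 1.
Proof. unfold Rpower; rewrite ln_1, Rmult_0_r; apply exp_0. Qed.
Lemma RP_pow x y n : 0 < x -> Rpower x y ^ n = Rpower (x ^ n) y.
Proof.
  intros hx. rewrite <- Rpower_pow by apply RP_pos. rewrite Rpower_mult.
  unfold Rpower at 2. rewrite ln_pow by auto. unfold Rpower. f_equal; ring.
Qed.
Lemma RP_exp0 x : 0 < x -> Rpower x 0 = 1.
Proof. apply Rpower_O. Qed.

Lemma RP_base_le x x' y : 0 < x -> x <= x' -> 0 <= y -> Rpower x y <= Rpower x' y.
Proof. intros. apply RP_le. apply Rmult_le_compat_l; auto. apply ln_le'; auto. Qed.
Lemma RP_base_ge x x' y : 0 < x -> x <= x' -> y <= 0 -> Rpower x' y <= Rpower x y.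
Proof.
  intros. apply RP_le. assert (ln x <= ln x') by (apply ln_le'; auto). nra.
Qed.
Lemma RP_le1 x y : 0 < x -> x <= 1 -> 0 <= y -> Rpower x y <= 1.
Proof. intros. rewrite <- (RP_1 y). apply RP_base_le; auto. Qed.
Lemma RP_ge1 x y : 0 < x -> x <= 1 -> y <= 0 -> 1 <= Rpower x y.
Proof. intros. rewrite <- (RP_1 y). apply RP_base_ge; auto. Qed.
Lemma RP_ge1' x y : 1 <= x -> 0 <= y -> 1 <= Rpower x y.
Proof. intros. rewrite <- (RP_1 y). apply RP_base_le; auto; lra. Qed.
Lemma RP_lt1 x y : 0 < x -> x < 1 -> 0 < y -> Rpower x y < 1.
Proof.
  intros. unfold Rpower. rewrite <- exp_0. apply exp_increasing.
  assert (ln x < 0) by (apply ln_neg; auto). nra.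
Qed.

Lemma rsum_scal_l n F v : rsum n (fun i => v * F i) = v * rsum n F.
Proof. induction n; simpl. ring. rewrite IHn. ring. Qed.
Lemma rsum_shift M F : rsum (S M) F = F 0%nat + rsum M (fun n => F (S n)).
Proof. induction M; simpl in *. ring. rewrite IHM. ring. Qed.

Lemma geo_sum r M : 0 <= r < 1 -> rsum M (fun n => r ^ n) <= 1 / (1 - r).
Proof.
  intros hr. assert (h : forall M, rsum M (fun n => r ^ n) * (1 - r) = 1 - r ^ M).
  { induction M0; simpl. ring. rewrite Rmult_plus_distr_r, IHM0. ring. }
  apply (Rmult_le_reg_r (1 - r)); [lra|]. rewrite h. unfold Rdiv. rewrite Rmult_1_l, Rinv_l by lra.
  assert (0 <= r ^ M) by (apply pow_le; lra). lra.
Qed.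

Definition ind_lt (x a : R) : R := if Rlt_dec x a then 1 else 0.
Definition ind_le (a x : R) : R := if Rle_dec a x then 1 else 0.

Section Sums.
Variable th : R.
Hypothesis hth : 0 < th < 1.

Lemma th_pow_pos n : 0 < th ^ n.
Proof. apply pow_lt; lra. Qed.
Lemma th_pow_le1 n : th ^ n <= 1.
Proof. destruct n. simpl; lra. destruct (pow_lt_1_compat th (S n)) as [_ h]; [lra|lia|lra]. Qed.

Lemma ind_lt_shift x a : ind_lt (th * x) a = ind_lt x (a / th).
Proof.
  unfold ind_lt. destruct (Rlt_dec (th * x) a), (Rlt_dec x (a / th)); auto; exfalso.
  - apply n. apply (Rmult_lt_reg_l th); [lra|]. field_simplify; lra.
  - apply n. apply (Rmult_lt_reg_l (/ th)); [apply Rinv_0_lt_compat; lra|].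
    replace (/ th * (th * x)) with x by (field; lra). unfold Rdiv in r. lra.
Qed.
Lemma ind_le_shift x a : ind_le a (th * x) = ind_le (a / th) x.
Proof.
  unfold ind_le. destruct (Rle_dec a (th * x)), (Rle_dec (a / th) x); auto; exfalso.
  - apply n. apply (Rmult_le_reg_l th); [lra|]. field_simplify; lra.
  - apply n. apply (Rmult_le_reg_l (/ th)); [apply Rinv_0_lt_compat; lra|].
    replace (/ th * (th * x)) with x by (field; lra). unfold Rdiv in r. lra.
Qed.

Lemma ind_lt_01 x a : 0 <= ind_lt x a <= 1.
Proof. unfold ind_lt; destruct Rlt_dec; lra. Qed.
Lemma ind_le_01 x a : 0 <= ind_le x a <= 1.
Proof. unfold ind_le; destruct Rle_dec; lra. Qed.

Lemma sum_ind_geo (ind : R -> R) r M : 0 <= r < 1 -> (forall x, 0 <= ind x <= 1) ->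
  rsum M (fun n => ind (th ^ n) * r ^ n) <= 1 / (1 - r).
Proof.
  intros hr hi. eapply Rle_trans; [|apply (geo_sum r M hr)]. apply rsum_le. intros n _.
  destruct (hi (th ^ n)). assert (0 <= r ^ n) by (apply pow_le; lra). nra.
Qed.

Lemma sumB e : 0 < e -> forall M a, 0 < a ->
  rsum M (fun n => ind_lt (th ^ n) a * Rpower th e ^ n) <= Rpower a e / (1 - Rpower th e).
Proof.
  intros he. set (r := Rpower th e).
  assert (hr : 0 < r < 1) by (split; [apply RP_pos| apply RP_lt1; lra]).
  assert (hre : Rpower th e * Rpower th (- e) = 1).
  { rewrite <- Rpower_plus. replace (e + - e) with 0 by ring. apply RP_exp0; lra. }
  induction M as [|M IH]; intros a ha.
  - simpl. apply Rdiv_le_0_compat; [left; apply RP_pos| lra].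
  - destruct (Rlt_dec 1 a) as [h1|h1].
    + assert (hae : 1 <= Rpower a e) by (apply RP_ge1'; lra).
      apply Rle_trans with (1 / (1 - r)).
      * apply (sum_ind_geo (fun x => ind_lt x a)); [lra|]. intros; apply ind_lt_01.
      * unfold Rdiv. apply Rmult_le_compat_r; [left; apply Rinv_0_lt_compat; lra| lra].
    + rewrite rsum_shift.
      rewrite (rsum_ext M _ (fun n => r * (ind_lt (th ^ n) (a / th) * r ^ n)))
        by (intros n; simpl; rewrite ind_lt_shift; ring).
      simpl. unfold ind_lt at 1. destruct (Rlt_dec 1 a); [lra|].
      rewrite rsum_scal_l.
      assert (IH' := IH (a / th) ltac:(apply Rdiv_lt_0_compat; lra)).
      rewrite RP_div in IH' by lra.
      apply Rle_trans with (0 * 1 + r * (Rpower a e * Rpower th (- e) / (1 - r))).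
      { apply Rplus_le_compat_l. apply Rmult_le_compat_l; lra. }
      right. unfold r in *. pose proof (RP_pos th e). rewrite Rpower_Ropp. field. split; lra.
Qed.

Lemma sumAneg e : e < 0 -> forall M a,
  rsum M (fun n => ind_le a (th ^ n) * Rpower th (- e) ^ n) <= 1 / (1 - Rpower th (- e)).
Proof.
  intros he M a. apply (sum_ind_geo (fun x => ind_le a x)).
  - split; [left; apply RP_pos| apply RP_lt1; lra].
  - intros; apply ind_le_01.
Qed.

Lemma sumApos e : 0 < e -> forall M a, 0 < a ->
  rsum M (fun n => ind_le a (th ^ n) * Rpower th (- e) ^ n) <=
  Rmax (1 / (1 - Rpower th e) * Rpower a (- e) - Rpower th e / (1 - Rpower th e)) 0.
Proof.
  intros he. set (u := Rpower th e).
  assert (hu : 0 < u < 1) by (split; [apply RP_pos| apply RP_lt1; lra]).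
  assert (hr : Rpower th (- e) = / u) by (unfold u; apply Rpower_Ropp).
  set (K := 1 / (1 - u)). set (L := u / (1 - u)).
  induction M as [|M IH]; intros a ha.
  - simpl. apply Rmax_r.
  - rewrite rsum_shift.
    rewrite (rsum_ext M _ (fun n => / u * (ind_le (a / th) (th ^ n) * Rpower th (- e) ^ n)))
      by (intros n; simpl; rewrite ind_le_shift, hr; ring).
    rewrite rsum_scal_l.
    assert (IH' := IH (a / th) ltac:(apply Rdiv_lt_0_compat; lra)).
    rewrite RP_div in IH' by lra. replace (Rpower th (- - e)) with u in IH' by (unfold u; f_equal; ring).
    assert (hae : 0 < Rpower a (- e)) by apply RP_pos.
    assert (hKL : K - L = 1) by (unfold K, L; field; lra).
    assert (hL : L * (/ u - 1) = 1) by (unfold L; field; lra).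
    assert (hiu : 1 < / u) by (rewrite <- Rinv_1; apply Rinv_lt_contravar; lra).
    assert (E : / u * Rmax (K * (Rpower a (- e) * u) - L) 0 = Rmax (K * Rpower a (- e) - / u * L) 0).
    { unfold Rmax. destruct (Rle_dec (K * (Rpower a (- e) * u) - L) 0);
        destruct (Rle_dec (K * Rpower a (- e) - / u * L) 0).
      - ring.
      - exfalso. apply n. replace (K * Rpower a (- e) - / u * L) with (/ u * (K * (Rpower a (- e) * u) - L)) by (field; lra).
        assert (0 < / u) by (apply Rinv_0_lt_compat; lra). nra.
      - exfalso. apply n. assert (0 < / u) by (apply Rinv_0_lt_compat; lra).
        replace (K * Rpower a (- e) - / u * L) with (/ u * (K * (Rpower a (- e) * u) - L)) in r by (field; lra).
        nra.
      - field; lra. }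
    assert (hL0 : 0 <= L) by (unfold L; apply Rdiv_le_0_compat; lra).
    simpl. unfold ind_le at 1. destruct (Rle_dec a 1) as [h1|h1].
    + assert (ha1 : 1 <= Rpower a (- e)) by (apply RP_ge1; lra).
      apply Rle_trans with (1 * 1 + / u * Rmax (K * (Rpower a (- e) * u) - L) 0).
      { apply Rplus_le_compat_l. apply Rmult_le_compat_l; [left; apply Rinv_0_lt_compat; lra|]. exact IH'. }
      rewrite E. assert (hK0 : 0 < K) by (unfold K; apply Rdiv_lt_0_compat; lra).
      unfold Rmax. destruct (Rle_dec (K * Rpower a (- e) - / u * L) 0);
        destruct (Rle_dec (K * Rpower a (- e) - L) 0); nra.
    + apply Rle_trans with (0 * 1 + / u * Rmax (K * (Rpower a (- e) * u) - L) 0).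
      { apply Rplus_le_compat_l. apply Rmult_le_compat_l; [left; apply Rinv_0_lt_compat; lra|]. exact IH'. }
      rewrite E. unfold Rmax. destruct (Rle_dec (K * Rpower a (- e) - / u * L) 0);
        destruct (Rle_dec (K * Rpower a (- e) - L) 0); nra.
Qed.

Lemma sumAzero : forall M a, 0 < a ->
  rsum M (fun n => ind_le a (th ^ n)) <= Rmax (1 - ln a / (- ln th)) 0.
Proof.
  assert (hl : ln th < 0) by (apply ln_neg; lra).
  induction M as [|M IH]; intros a ha.
  - simpl. apply Rmax_r.
  - rewrite rsum_shift.
    rewrite (rsum_ext M _ (fun n => ind_le (a / th) (th ^ n))) by (intros n; simpl; rewrite ind_le_shift; auto).
    assert (IH' := IH (a / th) ltac:(apply Rdiv_lt_0_compat; lra)).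
    replace (ln (a / th)) with (ln a + - ln th) in IH'
      by (unfold Rdiv; rewrite ln_mult, ln_Rinv; auto; try apply Rinv_0_lt_compat; lra).
    replace (1 - (ln a + - ln th) / - ln th) with (- ln a / - ln th) in IH' by (field; lra).
    simpl. unfold ind_le at 1. destruct (Rle_dec a 1) as [h1|h1].
    + assert (ln a <= 0) by (rewrite <- ln_1; apply ln_le'; auto).
      assert (0 <= - ln a / - ln th) by (apply Rdiv_le_0_compat; lra).
      rewrite Rmax_left in IH' by lra.
      apply Rle_trans with (1 - ln a / - ln th); [|apply Rmax_l].
      replace (1 - ln a / - ln th) with (1 + - ln a / - ln th) by (field; lra). lra.
    + assert (0 < ln a) by (apply ln_pos; lra).
      assert (0 < ln a / - ln th) by (apply Rdiv_lt_0_compat; lra).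
      eapply Rle_trans; [|apply Rmax_r].
      assert (- ln a / - ln th <= 0) by (replace (- ln a / - ln th) with (- (ln a / - ln th)) by (field; lra); lra).
      rewrite Rmax_right in IH' by lra. lra.
Qed.
End Sums.

Definition gt (a B c s : R) : R :=
  if Rle_dec a s then Rpower s (- B) else Rpower a (- B) * Rpower (s / a) (- c).

Section GT.
Variables (B c : R).
Hypothesis hB : 0 < B.
Hypothesis hc : 0 <= c.

Lemma gt_pos a s : 0 < gt a B c s.
Proof. unfold gt. destruct Rle_dec. apply RP_pos. apply Rmult_lt_0_compat; apply RP_pos. Qed.

Lemma gt_anti a s s' : 0 <= a -> 0 < s -> s <= s' -> gt a B c s' <= gt a B c s.
Proof.
  intros ha hs hss. unfold gt. destruct (Rle_dec a s'), (Rle_dec a s).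
  - apply RP_base_ge; lra.
  - assert (0 < a) by lra.
    apply Rle_trans with (Rpower a (- B) * 1).
    + rewrite Rmult_1_r. apply RP_base_ge; lra.
    + apply Rmult_le_compat_l; [left; apply RP_pos|]. apply RP_ge1; [apply Rdiv_lt_0_compat; lra| |lra].
      apply (Rmult_le_reg_r a); [lra|]. unfold Rdiv. rewrite Rmult_assoc, Rinv_l by lra. lra.
  - lra.
  - assert (0 < a) by lra. apply Rmult_le_compat_l; [left; apply RP_pos|].
    apply RP_base_ge; [apply Rdiv_lt_0_compat; lra| |lra].
    unfold Rdiv. apply Rmult_le_compat_r; [left; apply Rinv_0_lt_compat|]; lra.
Qed.

Lemma gt_double a s th : 0 <= a -> 0 < s -> 0 < th <= 1 ->
  gt a B c (th * s) <= Rpower th (- (B + c)) * gt a B c s.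
Proof.
  intros ha hs hth. unfold gt.
  assert (hth1 : 1 <= Rpower th (- c)) by (apply RP_ge1; lra).
  assert (hthB : 1 <= Rpower th (- B)) by (apply RP_ge1; lra).
  rewrite Ropp_plus_distr, Rpower_plus.
  destruct (Rle_dec a (th * s)), (Rle_dec a s).
  - rewrite RP_mul by lra. assert (0 < Rpower s (- B)) by apply RP_pos.
    assert (0 < Rpower th (- B)) by apply RP_pos. assert (0 < Rpower th (- B) * Rpower s (- B)) by (apply Rmult_lt_0_compat; auto). nra.
  - exfalso. assert (th * s <= s) by nra. lra.
  -
    assert (0 < a) by nra.
    rewrite RP_div by nra. rewrite RP_mul by lra.
    assert (E1 : Rpower a (- B) <= Rpower th (- B) * Rpower s (- B)).
    { rewrite <- RP_mul by lra. apply RP_base_ge; nra. }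
    assert (E2 : Rpower th (- c) * Rpower s (- c) * Rpower a (- - c) <= Rpower th (- c)).
    { rewrite Ropp_involutive. assert (Rpower s (- c) * Rpower a c <= 1).
      { replace (Rpower a c) with (/ Rpower a (- c)) by (rewrite Rpower_Ropp, Rinv_inv; auto).
        assert (0 < Rpower a (- c)) by apply RP_pos.
        assert (Rpower s (- c) <= Rpower a (- c)) by (apply RP_base_ge; lra).
        apply (Rmult_le_reg_r (Rpower a (- c))); auto. field_simplify; lra. }
      assert (0 < Rpower th (- c)) by apply RP_pos. nra. }
    assert (0 < Rpower a (- B)) by apply RP_pos.
    assert (0 < Rpower th (- c) * Rpower s (- c) * Rpower a (- - c)) by (repeat apply Rmult_lt_0_compat; apply RP_pos).
    assert (0 < Rpower th (- B)) by apply RP_pos.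
    assert (0 < Rpower s (- B)) by apply RP_pos.
    apply Rle_trans with (Rpower th (- B) * Rpower s (- B) * Rpower th (- c)).
    + apply Rle_trans with (Rpower a (- B) * Rpower th (- c)); [|nra].
      apply Rmult_le_compat_l; [lra|]. lra.
    + nra.
  - assert (0 < a) by lra.
    rewrite !RP_div by nra. rewrite RP_mul by lra.
    assert (0 < Rpower a (- B)) by apply RP_pos. assert (0 < Rpower th (- c)) by apply RP_pos.
    assert (0 < Rpower s (- c)) by apply RP_pos. assert (0 < Rpower a (- - c)) by apply RP_pos.
    assert (0 < Rpower th (- B)) by apply RP_pos.
    assert (EE : Rpower a (- B) * (Rpower th (- c) * Rpower s (- c) * Rpower a (- - c)) =
            Rpower th (- c) * (Rpower a (- B) * (Rpower s (- c) * Rpower a (- - c)))) by ring.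
    rewrite EE. apply Rmult_le_compat_r. 
    + apply Rmult_le_pos; [lra|]. apply Rmult_le_pos; lra.
    + nra.
Qed.
End GT.

Lemma T_split a B c D th n : 0 <= a -> 0 < th ->
  gt a B c (th ^ n) * Rpower (th ^ n) D =
  ind_le a (th ^ n) * Rpower th (D - B) ^ n + ind_lt (th ^ n) a * (Rpower a (c - B) * Rpower th (D - c) ^ n).
Proof.
  intros ha hth. assert (hx : 0 < th ^ n) by (apply pow_lt; auto).
  rewrite !RP_pow by auto. unfold gt, ind_le, ind_lt.
  destruct (Rle_dec a (th ^ n)); destruct (Rlt_dec (th ^ n) a); try lra.
  - rewrite <- Rpower_plus. replace (- B + D) with (D - B) by ring. ring.
  - assert (0 < a) by lra. rewrite RP_div by auto.
    replace (c - B) with (- B + - - c) by ring. replace (D - c) with (- c + D) by ring.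
    rewrite !Rpower_plus. ring.
Qed.

Lemma sum_T (B c D th N : R) : 0 < B -> 0 <= c -> c < D -> 0 < th < 1 -> 0 < N ->
  exists Cs, 0 < Cs /\ exists N1, forall N0, N1 <= N0 -> forall a, 0 <= a <= N ->
  (B - D < 0 \/ 0 < a) -> forall M,
  rsum M (fun n => gt a B c (th ^ n) * Rpower (th ^ n) D) <= Cs * Kfun (B - D) N0 a.
Proof.
  intros hB hc hcD hth hN.
  set (eta := Rpower th (D - c)).
  assert (heta : 0 < eta < 1) by (split; [apply RP_pos| apply RP_lt1; lra]).
  assert (hPB : forall a M, 0 <= a -> rsum M (fun n => ind_lt (th ^ n) a * (Rpower a (c - B) * eta ^ n))
          <= (if Rlt_dec 0 a then Rpower a (D - B) else 0) / (1 - eta)).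
  { intros a M ha. destruct (Rlt_dec 0 a) as [ha'|ha'].
    - rewrite (rsum_ext M _ (fun n => Rpower a (c - B) * (ind_lt (th ^ n) a * eta ^ n))) by (intros; ring).
      rewrite rsum_scal_l. eapply Rle_trans.
      + apply Rmult_le_compat_l; [left; apply RP_pos|]. apply (sumB th hth (D - c)); lra.
      + right. unfold Rdiv. rewrite <- Rmult_assoc, <- Rpower_plus. f_equal. f_equal. ring.
    - assert (a = 0) by lra. subst a.
      rewrite (rsum_ext M _ (fun _ => 0 * 0)).
      + rewrite rsum_scal. unfold Rdiv. lra.
      + intros n. unfold ind_lt. destruct Rlt_dec; [|ring]. pose proof (pow_lt th n ltac:(lra)). lra. }
  assert (Hsplit : forall a M, 0 <= a -> rsum M (fun n => gt a B c (th ^ n) * Rpower (th ^ n) D) =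
     rsum M (fun n => ind_le a (th ^ n) * Rpower th (D - B) ^ n) +
     rsum M (fun n => ind_lt (th ^ n) a * (Rpower a (c - B) * eta ^ n))).
  { intros a M ha. rewrite <- rsum_plus. apply rsum_ext. intros n. apply T_split; lra. }
  destruct (Rlt_dec 0 (B - D)) as [hal|hal]; [|destruct (Req_EM_T (B - D) 0) as [ha0|ha0]].
  -
    set (K := 1 / (1 - Rpower th (B - D))).
    assert (hu : 0 < Rpower th (B - D) < 1) by (split; [apply RP_pos| apply RP_lt1; lra]).
    assert (hK : 0 < K) by (unfold K; apply Rdiv_lt_0_compat; lra).
    exists (K + 1 / (1 - eta)). split.
    { assert (0 < 1 / (1 - eta)) by (apply Rdiv_lt_0_compat; lra). lra. }
    exists 0. intros N0 _ a ha hor M.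
    destruct hor as [hor|hor]; [lra|].
    unfold Kfun. destruct (Rlt_dec 0 (B - D)); [|lra].
    rewrite Hsplit by lra.
    assert (hA := sumApos th hth (B - D) hal M a hor).
    replace (Rpower th (- (B - D))) with (Rpower th (D - B)) in hA by (f_equal; ring).
    assert (hL : 0 <= Rpower th (B - D) / (1 - Rpower th (B - D))) by (apply Rdiv_le_0_compat; lra).
    assert (hA' : rsum M (fun n => ind_le a (th ^ n) * Rpower th (D - B) ^ n) <= K * Rpower a (- (B - D))).
    { eapply Rle_trans; [exact hA|]. fold K. unfold Rmax. destruct Rle_dec.
      - left. apply Rmult_lt_0_compat; auto. apply RP_pos.
      - lra. }
    assert (hB' := hPB a M ltac:(lra)). destruct (Rlt_dec 0 a); [|lra].
    replace (D - B) with (- (B - D)) in hB' by ring.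
    unfold Rdiv in hB'. unfold Rdiv. lra.
  -
    set (lam := - ln th).
    assert (hlam : 0 < lam) by (unfold lam; assert (ln th < 0) by (apply ln_neg; lra); lra).
    exists (1 + 1 / lam + 1 / (1 - eta)). split.
    { assert (0 < 1 / (1 - eta)) by (apply Rdiv_lt_0_compat; lra).
      assert (0 < 1 / lam) by (apply Rdiv_lt_0_compat; lra). lra. }
    exists (Rmax 1 (exp 1 * N)). intros N0 hN0 a ha hor M.
    destruct hor as [hor|hor]; [lra|].
    unfold Kfun. destruct (Rlt_dec 0 (B - D)); [lra|]. destruct (Req_EM_T (B - D) 0); [|lra].
    rewrite Hsplit by lra.
    assert (hN01 : 1 <= N0) by (eapply Rle_trans; [apply Rmax_l| exact hN0]).
    assert (hN0N : exp 1 * N <= N0) by (eapply Rle_trans; [apply Rmax_r| exact hN0]).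
    assert (hlnN0 : 0 <= ln N0) by (rewrite <- ln_1; apply ln_le'; lra).
    assert (hlnq : ln (N0 / a) = ln N0 - ln a).
    { unfold Rdiv. rewrite ln_mult, ln_Rinv; try lra. apply Rinv_0_lt_compat; lra. }
    assert (hge1 : 1 <= ln (N0 / a)).
    { rewrite <- (ln_exp 1). apply ln_le'. apply exp_pos.
      apply (Rmult_le_reg_r a); [lra|]. unfold Rdiv. rewrite Rmult_assoc, Rinv_l, Rmult_1_r by lra.
      pose proof (exp_pos 1). nra. }
    assert (hA := sumAzero th hth M a hor).
    rewrite (rsum_ext M _ (fun n => ind_le a (th ^ n))) by
      (intros; replace (D - B) with 0 by lra; rewrite RP_exp0, pow1 by lra; ring).
    assert (hB' := hPB a M ltac:(lra)). destruct (Rlt_dec 0 a); [|lra].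
    replace (D - B) with 0 in hB' by lra. rewrite RP_exp0 in hB' by lra.
    fold lam in hA.
    assert (hR : Rmax (1 - ln a / lam) 0 <= (1 + 1 / lam) * ln (N0 / a)).
    { unfold Rmax. destruct Rle_dec.
      - assert (0 < 1 / lam) by (apply Rdiv_lt_0_compat; lra). nra.
      - rewrite hlnq. unfold Rdiv. assert (0 < / lam) by (apply Rinv_0_lt_compat; lra). nra. }
    assert (0 < 1 / (1 - eta)) by (apply Rdiv_lt_0_compat; lra).
    unfold Rdiv in *. nra.
  -
    assert (hal' : B - D < 0) by lra.
    set (u := Rpower th (- (B - D))).
    assert (hu : 0 < u < 1) by (split; [apply RP_pos| apply RP_lt1; lra]).
    exists (1 / (1 - u) + Rpower N (- (B - D)) / (1 - eta)). split.
    { assert (0 < 1 / (1 - u)) by (apply Rdiv_lt_0_compat; lra).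
      assert (0 < Rpower N (- (B - D)) / (1 - eta)) by (apply Rdiv_lt_0_compat; [apply RP_pos|lra]). lra. }
    exists 0. intros N0 _ a ha hor M.
    unfold Kfun. destruct (Rlt_dec 0 (B - D)); [lra|]. destruct (Req_EM_T (B - D) 0); [lra|].
    rewrite Hsplit by lra.
    assert (hA0 := sumAneg th hth (B - D) hal' M a). fold u in hA0.
    assert (hA : rsum M (fun n => ind_le a (th ^ n) * Rpower th (D - B) ^ n) <= 1 / (1 - u)).
    { replace (Rpower th (D - B)) with u by (unfold u; f_equal; ring). exact hA0. }
    assert (hB' := hPB a M ltac:(lra)).
    assert (hB'' : (if Rlt_dec 0 a then Rpower a (D - B) else 0) <= Rpower N (- (B - D))).
    { destruct (Rlt_dec 0 a). replace (D - B) with (- (B - D)) by ring. apply RP_base_le; lra.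
      left; apply RP_pos. }
    assert (0 < / (1 - eta)) by (apply Rinv_0_lt_compat; lra).
    assert (hBB : (if Rlt_dec 0 a then Rpower a (D - B) else 0) * / (1 - eta) <= Rpower N (- (B - D)) * / (1 - eta)).
    { apply Rmult_le_compat_r; lra. }
    unfold Rdiv in *. lra.
Qed.

Lemma pw_nonneg x y : 0 <= pw x y.
Proof. unfold pw; destruct Rlt_dec; [left; apply RP_pos| lra]. Qed.

Lemma capmin_pos S a : 0 < S -> 0 <= a -> 0 < capmin S a.
Proof.
  intros hS ha. unfold capmin. destruct Req_EM_T; [lra|].
  unfold Rmin. destruct Rle_dec; [apply Rdiv_lt_0_compat; lra| lra].
Qed.

Lemma phi_bound B q a S s0 : 0 < B -> 0 <= a -> 0 < s0 -> s0 <= S ->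
  Rpower S (- B) * Rpower (capmin S a) q <= gt a B (Rmax (B - q) 0) s0.
Proof.
  intros hB ha hs0 hS. set (c := Rmax (B - q) 0).
  assert (hc : 0 <= c) by apply Rmax_r.
  unfold capmin. destruct (Req_EM_T a 0) as [->|ha0].
  - rewrite RP_1, Rmult_1_r. unfold gt. destruct Rle_dec; [|lra]. apply RP_base_ge; lra.
  - assert (hapos : 0 < a) by lra.
    unfold Rmin. destruct (Rle_dec (S / a) 1) as [hSa|hSa].
    +
      destruct (Req_EM_T S a) as [->|hne].
      * replace (a / a) with 1 by (field; lra). rewrite RP_1, Rmult_1_r.
        unfold gt. destruct Rle_dec.
        -- apply RP_base_ge; lra.
        -- apply Rle_trans with (Rpower a (- B) * 1); [lra|].
           apply Rmult_le_compat_l; [left; apply RP_pos|]. apply RP_ge1; [apply Rdiv_lt_0_compat; lra| |].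
           ++ apply (Rmult_le_reg_r a); [lra|]. unfold Rdiv. rewrite Rmult_assoc, Rinv_l by lra. lra.
           ++ unfold c; apply Rge_le, Ropp_0_le_ge_contravar, Rmax_r.
      * assert (hSa' : S < a).
        { assert (S <= a). { apply (Rmult_le_reg_r (/ a)); [apply Rinv_0_lt_compat; lra|].
            rewrite Rinv_r by lra. exact hSa. } lra. }
        unfold gt. destruct (Rle_dec a s0); [lra|].
        set (y := S / a). set (y0 := s0 / a).
        assert (hy : 0 < y) by (unfold y; apply Rdiv_lt_0_compat; lra).
        assert (hy0 : 0 < y0) by (unfold y0; apply Rdiv_lt_0_compat; lra).
        assert (hyy : y0 <= y) by (unfold y0, y; unfold Rdiv; apply Rmult_le_compat_r; [left; apply Rinv_0_lt_compat|]; lra).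
        assert (hy1 : y < 1) by (unfold y; apply (Rmult_lt_reg_r a); [lra|]; unfold Rdiv; rewrite Rmult_assoc, Rinv_l by lra; lra).
        replace S with (a * y) at 1 by (unfold y; field; lra).
        rewrite RP_mul by lra.
        rewrite Rmult_assoc. apply Rmult_le_compat_l; [left; apply RP_pos|].
        rewrite <- Rpower_plus.
        unfold c, Rmax. destruct (Rle_dec (B - q) 0).
        -- replace (- 0) with 0 by ring. rewrite RP_exp0 by lra. apply RP_le1; lra.
        -- replace (- B + q) with (- (B - q)) by ring. apply RP_base_ge; lra.
    +
      rewrite RP_1, Rmult_1_r.
      assert (hSa' : a < S).
      { apply Rnot_le_lt in hSa. apply (Rmult_lt_reg_r (/ a)); [apply Rinv_0_lt_compat; lra|].
        rewrite Rinv_r by lra. exact hSa. }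
      unfold gt. destruct Rle_dec.
      * apply RP_base_ge; lra.
      * apply Rle_trans with (Rpower a (- B) * 1).
        -- rewrite Rmult_1_r. apply RP_base_ge; lra.
        -- apply Rmult_le_compat_l; [left; apply RP_pos|]. apply RP_ge1; [apply Rdiv_lt_0_compat; lra| |].
           ++ apply (Rmult_le_reg_r a); [lra|]. unfold Rdiv. rewrite Rmult_assoc, Rinv_l by lra. lra.
           ++ unfold c; apply Rge_le, Ropp_0_le_ge_contravar, Rmax_r.
Qed.

Lemma pw_pos x y : 0 < x -> pw x y = Rpower x y.
Proof. intros; unfold pw; destruct Rlt_dec; [auto|lra]. Qed.
Lemma pw_zero x y : ~ 0 < x -> pw x y = 0.
Proof. intros; unfold pw; destruct Rlt_dec; [contradiction|auto]. Qed.

Lemma PW k d b gamma gammat p a z s0 : 0 < b -> 0 < gamma -> gamma < gammat -> 0 <= a -> 0 < s0 ->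
  (0 < Rabs (z 0%nat - z 1%nat) + dist_k k (fun i => z (2 + i)%nat) (fun i => z (2 + k + i)%nat) ->
   s0 <= pw (Rabs (z 0%nat - z 1%nat)) (gamma / 4) + pw (dist_k k (fun i => z (2 + i)%nat) (fun i => z (2 + k + i)%nat)) (gamma / 2)) ->
  integrand k d b gamma gammat p a z <=
  Rpower 2 (gammat / gamma * b) * gt a (gammat / gamma * b) (Rmax (gammat / gamma * b - p / (2 * INR d)) 0) s0.
Proof.
  intros hb hg hgg ha hs0 hS. set (B := gammat / gamma * b).
  assert (hB : 0 < B) by (unfold B; apply Rmult_lt_0_compat; [apply Rdiv_lt_0_compat|]; lra).
  assert (hgt : 0 < Rpower 2 B * gt a B (Rmax (B - p / (2 * INR d)) 0) s0).
  { apply Rmult_lt_0_compat; [apply RP_pos| apply gt_pos]. }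
  unfold integrand. cbv zeta.
  set (e := Rabs (z 0%nat - z 1%nat)) in *.
  set (r := dist_k k (fun i => z (2 + i)%nat) (fun i => z (2 + k + i)%nat)) in *.
  destruct (Rlt_dec 0 (e + r)) as [her|her]; [|lra].
  specialize (hS her).
  set (u := pw e (gamma / 4)) in *. set (v := pw r (gamma / 2)) in *.
  assert (hu0 : 0 <= u) by apply pw_nonneg. assert (hv0 : 0 <= v) by apply pw_nonneg.
  set (S := u + v) in *.
  assert (hSpos : 0 < S) by lra.
  assert (hsum : 0 < u + v) by exact hSpos.
  set (P := 2 * gammat / gamma).
  assert (hP : 0 < P) by (unfold P; apply Rdiv_lt_0_compat; lra).
  set (X := pw e (gammat / 2) + pw r gammat).
  assert (hX : Rpower (S / 2) P <= X).
  { assert (hxe : 0 <= pw e (gammat / 2)) by apply pw_nonneg.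
    assert (hxr : 0 <= pw r gammat) by apply pw_nonneg.
    destruct (Rle_dec v u) as [huv|huv].
    - assert (hupos : 0 < u) by lra.
      assert (hepos : 0 < e) by (destruct (Rlt_dec 0 e); auto; unfold u in hupos; rewrite pw_zero in hupos; lra).
      assert (E : pw e (gammat / 2) = Rpower u P).
      { unfold u. rewrite !pw_pos by auto. rewrite Rpower_mult. f_equal. unfold P. field. lra. }
      apply Rle_trans with (pw e (gammat / 2)); [|unfold X; lra].
      rewrite E. apply RP_base_le; [apply Rdiv_lt_0_compat; lra| unfold S; lra| lra].
    - assert (hvpos : 0 < v) by lra.
      assert (hrpos : 0 < r) by (destruct (Rlt_dec 0 r); auto; unfold v in hvpos; rewrite pw_zero in hvpos; lra).
      assert (E : pw r gammat = Rpower v P).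
      { unfold v. rewrite !pw_pos by auto. rewrite Rpower_mult. f_equal. unfold P. field. lra. }
      apply Rle_trans with (pw r gammat); [|unfold X; lra].
      rewrite E. apply RP_base_le; [apply Rdiv_lt_0_compat; lra| unfold S; lra| lra]. }
  assert (hX1 : Rpower X (- b / 2) <= Rpower 2 B * Rpower S (- B)).
  { apply Rle_trans with (Rpower (Rpower (S / 2) P) (- b / 2)).
    - apply RP_base_ge; [apply RP_pos| auto|]. unfold Rdiv; nra.
    - rewrite Rpower_mult. replace (P * (- b / 2)) with (- B) by (unfold P, B; field; lra).
      rewrite RP_div by lra. rewrite Ropp_involutive. lra. }
  assert (hcap : 0 < capmin S a) by (apply capmin_pos; auto).
  rewrite (pw_pos (capmin S a)) by auto.
  assert (hph := phi_bound B (p / (2 * INR d)) a S s0 hB ha hs0 hS).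
  assert (0 < Rpower (capmin S a) (p / (2 * INR d))) by apply RP_pos.
  assert (0 < Rpower 2 B) by apply RP_pos.
  apply Rle_trans with (Rpower 2 B * Rpower S (- B) * Rpower (capmin S a) (p / (2 * INR d))).
  - apply Rmult_le_compat_r; lra.
  - rewrite Rmult_assoc. apply Rmult_le_compat_l; lra.
Qed.

Lemma rsum_ge_term n F i : (forall j, (j < n)%nat -> 0 <= F j) -> (i < n)%nat -> F i <= rsum n F.
Proof.
  induction n; intros h hi; [lia|]. simpl.
  destruct (Nat.eq_dec i n) as [->|hne].
  - assert (0 <= rsum n F) by (apply rsum_nonneg; intros; apply h; lia). lra.
  - assert (F i <= rsum n F) by (apply IHn; [intros; apply h; lia| lia]). specialize (h n ltac:(lia)). lra.
Qed.

Lemma dist_ge k x y i : (i < k)%nat -> Rabs (x i - y i) <= dist_k k x y.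
Proof.
  intros hi. unfold dist_k. rewrite <- sqrt_Rsqr_abs. apply sqrt_le_1_alt.
  unfold Rsqr. replace ((x i - y i) * (x i - y i)) with ((x i - y i) ^ 2) by ring.
  apply (rsum_ge_term k (fun i => (x i - y i) ^ 2)); auto. intros; apply pow2_ge_0.
Qed.

Lemma dist_nonneg k x y : 0 <= dist_k k x y.
Proof. apply sqrt_pos. Qed.

Lemma rprod_scal k F e : rprod k (fun i => F i * e) = rprod k F * e ^ k.
Proof. induction k; simpl. ring. rewrite IHk. ring. Qed.

Lemma rprod_pos n F : (forall i, (i < n)%nat -> 0 < F i) -> 0 < rprod n F.
Proof. induction n; intros h; simpl. lra. apply Rmult_lt_0_compat. apply IHn; intros; apply h; lia. apply h; lia. Qed.

Lemma RP_sq e g : 0 < e -> Rpower (e * e) (g / 4) = Rpower e (g / 2).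
Proof. intros. rewrite RP_mul by auto. rewrite <- Rpower_plus. f_equal. field. Qed.

Theorem lemma2p3 (T t0 t1 : R) (k : nat) (aJ bJ : nat -> R) (d : nat)
  (hT : 0 < T) (hI : 0 < t0 /\ t0 < t1 /\ t1 <= T)
  (hJ : forall i, (i < k)%nat -> aJ i < bJ i) (hd : (1 <= d)%nat)
  (N b gamma gammat p : R)
  (hN : 0 < N) (hb : 0 < b) (hg : 0 < gamma) (hgg : gamma < gammat)
  (hp : p > 2 * INR d / gamma * (gammat * b - 2 * INR k - 4)) :
  let alpha := gammat / gamma * b - (4 + 2 * INR k) / gamma in
  exists C : R, 0 < C /\
  exists N1 : R, forall N0 : R, N1 <= N0 ->
  forall a : R, 0 <= a <= N -> (alpha < 0 \/ 0 < a) ->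
    integral_le (2 + 2 * k) (corner k t0 aJ) (corner k t1 bJ)
      (integrand k d b gamma gammat p a) (C * Kfun alpha N0 a).
Proof.
  cbv zeta. destruct hI as [ht0 [ht01 ht1T]].
  set (B := gammat / gamma * b).
  set (q := p / (2 * INR d)).
  set (c := Rmax (B - q) 0).
  set (D := (4 + 2 * INR k) / gamma).
  set (th := Rpower (/ 2) (gamma / 2)).
  assert (hth : 0 < th < 1) by (split; [apply RP_pos| apply RP_lt1; lra]).
  assert (hB : 0 < B) by (unfold B; apply Rmult_lt_0_compat; [apply Rdiv_lt_0_compat|]; lra).
  assert (hc : 0 <= c) by apply Rmax_r.
  assert (hk0 : 0 <= INR k) by apply pos_INR.
  assert (hD : 0 < D) by (unfold D; apply Rdiv_lt_0_compat; lra).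
  assert (hd0 : 1 <= INR d) by (apply (le_INR 1); lia).
  assert (hcD : c < D).
  { unfold c, Rmax. destruct Rle_dec; [lra|].
    unfold B, q, D. 
    assert (hq : (gammat * b - 2 * INR k - 4) / gamma < p / (2 * INR d)).
    { apply (Rmult_lt_reg_l (2 * INR d)); [lra|].
      replace (2 * INR d * (p / (2 * INR d))) with p by (field; lra).
      replace (2 * INR d * ((gammat * b - 2 * INR k - 4) / gamma)) with (2 * INR d / gamma * (gammat * b - 2 * INR k - 4)) by (field; lra).
      lra. }
    replace (gammat / gamma * b) with ((gammat * b - 2 * INR k - 4) / gamma + (4 + 2 * INR k) / gamma) by (field; lra).
    lra. }
  destruct (sum_T B c D th N hB hc hcD hth hN) as [Cs [hCs [N1 hN1]]].
  set (Vb := Vbig k t0 t1 aJ bJ).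
  assert (hVb : 0 < Vb) by (apply Vbig_pos; auto).
  set (Ccov := Vb * cfac (t1 - t0) * rprod k (fun i => cfac (bJ i - aJ i))).
  assert (hcf : forall L, 0 < L -> 0 < cfac L).
  { intros L hL. unfold cfac. apply Rdiv_lt_0_compat; nra. }
  assert (hCcov : 0 < Ccov).
  { unfold Ccov. apply Rmult_lt_0_compat; [apply Rmult_lt_0_compat; auto; apply hcf; lra|].
    apply rprod_pos. intros i hi. apply hcf. specialize (hJ i hi). lra. }
  set (C0 := Rpower 2 B).
  set (Dbl := Rpower th (- (B + c))).
  exists (C0 * Cs * (Vb + Dbl * Ccov)). split.
  { assert (0 < C0) by apply RP_pos. assert (0 < Dbl) by apply RP_pos.
    apply Rmult_lt_0_compat; [apply Rmult_lt_0_compat; auto| nra]. }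
  exists N1. intros N0 hN0 a ha hor l hl.
  assert (ha0 : 0 <= a) by lra.
  set (lam := fun n => C0 * gt a B c (th ^ n)).
  set (LQ := fun n => covj k t0 t1 aJ bJ ((/ 2) ^ n) k).
  assert (heps : forall n, 0 < (/ 2) ^ n) by (intros; apply pow_lt; lra).
  assert (heps1 : forall n, (/ 2) ^ n <= 1).
  { intros n. destruct n. simpl; lra. destruct (pow_lt_1_compat (/ 2) (S n)) as [_ h]; [lra|lia|lra]. }
  assert (hthn : forall n, th ^ n = Rpower ((/ 2) ^ n) (gamma / 2)).
  { intros n. unfold th. apply RP_pow. lra. }
  assert (hC0 : 0 < C0) by apply RP_pos.
  assert (hPW : forall z s0, 0 < s0 ->
     (0 < Rabs (z 0%nat - z 1%nat) + dist_k k (fun i => z (2 + i)%nat) (fun i => z (2 + k + i)%nat) ->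
      s0 <= pw (Rabs (z 0%nat - z 1%nat)) (gamma / 4) + pw (dist_k k (fun i => z (2 + i)%nat) (fun i => z (2 + k + i)%nat)) (gamma / 2)) ->
     integrand k d b gamma gammat p a z <= C0 * gt a B c s0).
  { intros z s0 hs0 hS. apply PW; auto. }
  assert (hmono : forall n, lam n <= lam (S n)).
  { intros n. unfold lam. apply Rmult_le_compat_l; [lra|]. apply gt_anti; auto.
    - apply pow_lt; lra.
    - simpl. assert (0 < th ^ n) by (apply pow_lt; lra). nra. }
  assert (hl0 : 0 <= lam 0%nat) by (unfold lam; left; apply Rmult_lt_0_compat; [lra| apply gt_pos]).
  assert (hLQok : forall n, Forall (okbox (2 + 2 * k)) (LQ n)).
  { intros n. apply Forall_forall. intros Q hQ. exact (covj_ok k t0 t1 aJ bJ ((/ 2) ^ n) ht01 hJ (heps n) k Q hQ). }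
  assert (hbig : forall i, (i < 2 + 2 * k)%nat -> corner k t0 aJ i <= corner k t1 bJ i).
  { intros i Hi. exact (bigbox_ok k t0 t1 aJ bJ ht01 hJ i Hi). }
  assert (hLQ : forall n z, in_box (2 + 2 * k) (corner k t0 aJ) (corner k t1 bJ) z ->
     lam n < integrand k d b gamma gammat p a z ->
     exists Q, In Q (LQ n) /\ in_box (2 + 2 * k) (fst Q) (snd Q) z).
  { intros n z hz hlt.
    set (eps := (/ 2) ^ n).
    destruct (classic (Rabs (z 0%nat - z 1%nat) < eps * eps /\
       forall i, (i < k)%nat -> Rabs (z (2 + i)%nat - z (2 + k + i)%nat) < eps)) as [[h1 h2]|hn].
    - exact (covj_cover k t0 t1 aJ bJ eps (heps n) k (le_n k) z hz h1 h2).
    - exfalso.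
      assert (hf : integrand k d b gamma gammat p a z <= lam n).
      { unfold lam. apply hPW. { apply pow_lt; lra. }
        intros _. rewrite hthn. fold eps.
        assert (hepsp : 0 < eps) by apply heps.
        apply not_and_or in hn. destruct hn as [hn|hn].
        + assert (he : eps * eps <= Rabs (z 0%nat - z 1%nat)) by lra.
          assert (hep : 0 < Rabs (z 0%nat - z 1%nat)) by nra.
          rewrite (pw_pos (Rabs (z 0%nat - z 1%nat))) by auto.
          assert (Rpower eps (gamma / 2) <= Rpower (Rabs (z 0%nat - z 1%nat)) (gamma / 4)).
          { rewrite <- RP_sq by auto. apply RP_base_le; nra. }
          pose proof (pw_nonneg (dist_k k (fun i => z (2 + i)%nat) (fun i => z (2 + k + i)%nat)) (gamma / 2)).
          lra.
        + apply not_all_ex_not in hn. destruct hn as [i hi]. apply imply_to_and in hi. destruct hi as [hik hi].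
          assert (eps <= Rabs (z (2 + i)%nat - z (2 + k + i)%nat)) by lra.
          pose proof (dist_ge k (fun i => z (2 + i)%nat) (fun i => z (2 + k + i)%nat) i hik) as hd'.
          cbv beta in hd'.
          set (r := dist_k k (fun i => z (2 + i)%nat) (fun i => z (2 + k + i)%nat)) in *.
          assert (hr : 0 < r) by lra.
          rewrite (pw_pos r) by auto.
          assert (Rpower eps (gamma / 2) <= Rpower r (gamma / 2)) by (apply RP_base_le; lra).
          pose proof (pw_nonneg (Rabs (z 0%nat - z 1%nat)) (gamma / 4)).
          lra. }
      lra. }
  assert (hM : forall e, In e l -> exists M0, ec e <= lam M0).
  { intros [[cc a'] b'] he. unfold ec; simpl.
    pose proof hl as [hF _]. rewrite Forall_forall in hF. specialize (hF _ he). simpl in hF.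
    destruct hF as [hc0 [hab hz]].
    assert (hin : in_box (2 + 2 * k) a' b' a') by (intros i Hi; destruct (hab i Hi); lra).
    specialize (hz a' hin).
    set (E := Rabs (a' 0%nat - a' 1%nat)) in *.
    set (Rr := dist_k k (fun i => a' (2 + i)%nat) (fun i => a' (2 + k + i)%nat)) in *.
    assert (hE : 0 <= E) by apply Rabs_pos. assert (hRr : 0 <= Rr) by apply dist_nonneg.
    destruct (Rlt_dec 0 (E + Rr)) as [hpos|hnp].
    - assert (hS : 0 < pw E (gamma / 4) + pw Rr (gamma / 2)).
      { pose proof (pw_nonneg E (gamma / 4)). pose proof (pw_nonneg Rr (gamma / 2)).
        destruct (Rlt_dec 0 E).
        - rewrite (pw_pos E) by auto. pose proof (RP_pos E (gamma / 4)). lra.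
        - rewrite (pw_pos Rr) by lra. pose proof (RP_pos Rr (gamma / 2)). lra. }
      destruct (pow_lt_1_zero th ltac:(rewrite Rabs_right; lra) _ hS) as [N0' hN0'].
      specialize (hN0' N0' (le_n _)).
      assert (0 < th ^ N0') by (apply pow_lt; lra).
      rewrite Rabs_right in hN0' by lra.
      exists N0'. eapply Rle_trans; [exact hz|]. apply hPW; [lra|]. intros _. exact (Rlt_le _ _ hN0').
    - exists 0%nat.
      assert (hz0 : integrand k d b gamma gammat p a a' = 0).
      { unfold integrand. cbv zeta. fold E. fold Rr. destruct Rlt_dec; [contradiction|auto]. }
      lra. }
  destruct (layer_main lam hmono hl0 (2 + 2 * k) (corner k t0 aJ) (corner k t1 bJ)
             (integrand k d b gamma gammat p a) LQ hLQok hLQ hbig l hl hM) as [M HM].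
  eapply Rle_trans; [exact HM|].
  assert (hTT := hN1 N0 hN0 a ha hor).
  assert (hK0 : gt a B c 1 <= Cs * Kfun (B - D) N0 a).
  { specialize (hTT 1%nat). simpl in hTT. rewrite RP_1 in hTT. lra. }
  assert (hsv : sumvol (2 + 2 * k) ((corner k t0 aJ, corner k t1 bJ) :: nil) = Vb).
  { unfold sumvol, Vb, Vbig; simpl. ring. }
  rewrite hsv.
  assert (hDbl : 0 < Dbl) by apply RP_pos.
  assert (heD : forall n, Rpower (th ^ n) D = (/ 2) ^ n * (/ 2) ^ n * ((/ 2) ^ n) ^ k).
  { intros n. rewrite hthn, Rpower_mult.
    replace (gamma / 2 * D) with (INR (2 + k)) by (unfold D; rewrite plus_INR; simpl; field; lra).
    rewrite Rpower_pow by apply heps. simpl. ring. }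
  assert (hterm : forall n, lam (S n) * sumvol (2 + 2 * k) (LQ n) <=
      (C0 * Dbl * Ccov) * (gt a B c (th ^ n) * Rpower (th ^ n) D)).
  { intros n.
    assert (h1 : lam (S n) <= C0 * Dbl * gt a B c (th ^ n)).
    { unfold lam. simpl. rewrite Rmult_assoc. apply Rmult_le_compat_l; [lra|].
      apply gt_double; auto; [apply pow_lt; lra| lra]. }
    assert (h2 : sumvol (2 + 2 * k) (LQ n) <= Ccov * Rpower (th ^ n) D).
    { unfold LQ. eapply Rle_trans.
      - apply covj_vol; auto.
      - rewrite rprod_scal, heD. unfold Ccov, Vb. right. ring. }
    assert (h3 : 0 <= sumvol (2 + 2 * k) (LQ n)) by (apply sumvol_nonneg; auto).
    assert (h4 : 0 <= lam (S n)) by (unfold lam; left; apply Rmult_lt_0_compat; [lra| apply gt_pos]).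
    assert (h5 : 0 <= C0 * Dbl * gt a B c (th ^ n)).
    { left. apply Rmult_lt_0_compat; [apply Rmult_lt_0_compat; auto| apply gt_pos]. }
    apply Rle_trans with ((C0 * Dbl * gt a B c (th ^ n)) * (Ccov * Rpower (th ^ n) D)).
    - apply Rmult_le_compat; auto.
    - right. ring. }
  assert (hsum : rsum M (fun n => lam (S n) * sumvol (2 + 2 * k) (LQ n)) <=
      (C0 * Dbl * Ccov) * (Cs * Kfun (B - D) N0 a)).
  { eapply Rle_trans; [apply rsum_le; intros; apply hterm|].
    rewrite rsum_scal_l. apply Rmult_le_compat_l.
    - left. apply Rmult_lt_0_compat; [apply Rmult_lt_0_compat|]; auto.
    - apply hTT. }
  assert (hlam0 : lam 0%nat * Vb <= C0 * Vb * (Cs * Kfun (B - D) N0 a)).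
  { unfold lam. simpl. rewrite (Rmult_comm C0 (gt a B c 1)).
    replace (gt a B c 1 * C0 * Vb) with (gt a B c 1 * (C0 * Vb)) by ring.
    rewrite (Rmult_comm (C0 * Vb)). apply Rmult_le_compat_r; auto.
    left; apply Rmult_lt_0_compat; auto. }
  apply Rle_trans with (C0 * Vb * (Cs * Kfun (B - D) N0 a) + (C0 * Dbl * Ccov) * (Cs * Kfun (B - D) N0 a)).
  - apply Rplus_le_compat; auto.
  - right. ring.
Qed.
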